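(* Let $\mathfrak g=\mathfrak{sl}_5(\mathbb C)$ with simple roots $\alpha_1,\dots,\alpha_4$. Let $e=X_{\alpha_1+\alpha_2}+X_{\alpha_2+\alpha_3}+X_{\alpha_3+\alpha_4}$, a generator of the nilpotent orbit with partition $(3,2)$, and let $(h^+,e,f)$ be an $\mathfrak{sl}_2$-triple. This orbit is conormal. Nevertheless, for the $\operatorname{ad}h^+$-invariant complement $\mathfrak n_f=\operatorname{Im}\operatorname{ad}f$ of $\mathfrak g^e$ (so that $\mathfrak n_f^\perp=\mathfrak g^f$), the transverse Poisson structure on $N_f=e+\mathfrak g^f$ is polynomial of degree $4$; in particular, it is not quadratic.
   Context: $(H_\alpha,X_\alpha,X_{-\alpha})$ denote Chevalley basis elements and $K$ is the Killing form. An orbit is conormal if the centralizer $\mathfrak g^e$ admits a complement that is a Lie subalgebra. Transverse Poisson structure. Choose a basis $Z_1,\dots,Z_k$ of $\mathfrak g^e$ and a basis $X_1,\dots,X_p$ of the complement $\mathfrak n$. Let $(\overline{Z_i},\overline{X_j})$ be the $K$-dual basis, and identify $\mathfrak n^\perp$ with $\mathbb C^k$ via $q\mapsto\sum_s q_s\overline{Z_s}$. Define: - $C_N(q)_{l,m}=K(e+\sum_s q_s\overline{Z_s},[X_l,X_m])$; - $D_N(q)_{l,j}=K(\sum_s q_s\overline{Z_s},[X_l,Z_j])$; - $A_N(q)_{i,j}=K(\sum_s q_s\overline{Z_s},[Z_i,Z_j])$. Then $\Lambda_N(q)=A_N+{}^tD_N\,C_N^{-1}D_N$. For $\operatorname{ad}h^+$-invariant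 complements it is polynomial in $q$, and its degree is the maximal degree of its entries. It is called quadratic if this degree is at most $2$. *)

(* Defs.v *)
From HB Require Import structures.
From mathcomp Require Import all_boot all_order all_algebra.
From mathcomp Require Import mpoly.
Set Implicit Arguments.
Unset Strict Implicit.
Unset Printing Implicit Defensive.
Import Order.TTheory GRing.Theory Num.Theory.
Local Open Scope ring_scope.

Section SL5.
Variable C : numClosedFieldType. (* stands for the complex numbers *)

Definition in_sl5 (Y : 'M[C]_5) : Prop := \tr Y = 0.

(* Lie bracket and Killing form of sl_5: K(A,B) = 2n tr(AB) with n = 5 *)
Definition lie (A B : 'M[C]_5) : 'M[C]_5 := A *m B - B *m A.
Definition killing (A B : 'M[C]_5) : C := 10%:R * \tr (A *m B).

(* Chevalley basis element X_{eps_i - eps_j} = E_{ij} (0-based indices) *)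
Definition ord5 (k : nat) : 'I_5 := inord k.
Definition Xroot (i j : nat) : 'M[C]_5 := delta_mx (ord5 i) (ord5 j).

(* e = X_{a1+a2} + X_{a2+a3} + X_{a3+a4} = E_13 + E_24 + E_35 *)
Definition e32 : 'M[C]_5 := Xroot 0 2 + Xroot 1 3 + Xroot 2 4.

Definition is_sl2_triple (h e f : 'M[C]_5) : Prop :=
  [/\ in_sl5 h, in_sl5 e, in_sl5 f &
      [/\ lie h e = 2%:R *: e, lie h f = - (2%:R *: f) & lie e f = h]].

Definition centralizer (e : 'M[C]_5) (Y : 'M[C]_5) : Prop :=
  in_sl5 Y /\ lie Y e = 0.

Definition image_ad (f : 'M[C]_5) (Y : 'M[C]_5) : Prop :=
  exists W, in_sl5 W /\ Y = lie f W.

Definition is_basis_of (m : nat) (S : 'M[C]_5 -> Prop) (B : 'I_m -> 'M[C]_5) : Prop :=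
  [/\ forall i, S (B i),
      forall c : 'I_m -> C, \sum_i c i *: B i = 0 -> forall i, c i = 0
    & forall Y, S Y -> exists c : 'I_m -> C, Y = \sum_i c i *: B i].

Definition lin_subspace (S : 'M[C]_5 -> Prop) : Prop :=
  S 0 /\ forall (a : C) x y, S x -> S y -> S (a *: x + y).

Definition is_complement_in (G S T : 'M[C]_5 -> Prop) : Prop :=
  (forall Y, G Y -> exists a b, [/\ S a, T b & Y = a + b]) /\
  (forall Y, S Y -> T Y -> Y = 0).

Definition conormal (e : 'M[C]_5) : Prop :=
  exists n : 'M[C]_5 -> Prop,
    [/\ lin_subspace n, (forall Y, n Y -> in_sl5 Y),
        is_complement_in in_sl5 (centralizer e) n
      & forall a b, n a -> n b -> n (lie a b)].

(* Transverse Poisson structure data, for bases Z (of g^e), X (of the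
   complement) and the K-dual elements Zbar *)
Section Transverse.
Variables (k p : nat) (e : 'M[C]_5) (Z : 'I_k -> 'M[C]_5) (X : 'I_p -> 'M[C]_5)
          (Zbar : 'I_k -> 'M[C]_5).

Definition qpoint (q : 'I_k -> C) : 'M[C]_5 := \sum_s q s *: Zbar s.

Definition C_N (q : 'I_k -> C) : 'M[C]_p :=
  \matrix_(l, m) killing (e + qpoint q) (lie (X l) (X m)).
Definition D_N (q : 'I_k -> C) : 'M[C]_(p, k) :=
  \matrix_(l, j) killing (qpoint q) (lie (X l) (Z j)).
Definition A_N (q : 'I_k -> C) : 'M[C]_k :=
  \matrix_(i, j) killing (qpoint q) (lie (Z i) (Z j)).
Definition Lambda_N (q : 'I_k -> C) : 'M[C]_k :=
  A_N q + (D_N q)^T *m invmx (C_N q) *m D_N q.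

End Transverse.

(* (Zbar, Xbar) is the K-dual basis of (Z, X); only Zbar enters *)
Definition is_dual_Zpart (k p : nat) (Z : 'I_k -> 'M[C]_5) (X : 'I_p -> 'M[C]_5)
  (Zbar : 'I_k -> 'M[C]_5) : Prop :=
  [/\ forall s, in_sl5 (Zbar s),
      forall s j, killing (Zbar s) (Z j) = (s == j)%:R
    & forall s l, killing (Zbar s) (X l) = 0].

End SL5.

(* Main.v *)
Require Import Defs.
From HB Require Import structures.
From mathcomp Require Import all_boot all_order all_algebra.
From mathcomp Require Import mpoly.
From mathcomp Require Import ring lra zify.
Import GRing.Theory Num.Theory.
Local Open Scope ring_scope.
Set Implicit Arguments.
Unset Strict Implicit.
Unset Printing Implicit Defensive.

Section Infra.
Variable C : numClosedFieldType.
Implicit Types F G H : nat -> nat -> C.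

Definition mx F : 'M[C]_5 := \matrix_(i,j) F i j.

Lemma mxE5 F i j : (i < 5)%N -> (j < 5)%N -> mx F (inord i) (inord j) = F i j.
Proof. by move=> hi hj; rewrite mxE !inordK. Qed.

Definition mul5 F G (i j : nat) : C :=
  F i 0%N * G 0%N j + F i 1%N * G 1%N j + F i 2%N * G 2%N j + F i 3%N * G 3%N j + F i 4%N * G 4%N j.

Lemma sum5 (u : 'I_5 -> C) : \sum_(k < 5) u k =
  u (inord 0) + u (inord 1) + u (inord 2) + u (inord 3) + u (inord 4).
Proof.
rewrite !big_ord_recr big_ord0 /= add0r.
by congr (_ + _ + _ + _ + _); congr u; apply/val_inj; rewrite /= inordK.
Qed.

Lemma mul_mx F G : mx F *m mx G = mx (mul5 F G).
Proof.
apply/matrixP => i j; rewrite !mxE sum5 !mxE /mul5 !inordK //.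
Qed.

Lemma lie_mx F G : lie (mx F) (mx G) = mx (fun i j => mul5 F G i j - mul5 G F i j).
Proof. by rewrite /lie !mul_mx; apply/matrixP => i j; rewrite !mxE. Qed.

Lemma tr_mx F : \tr (mx F) = F 0%N 0%N + F 1%N 1%N + F 2%N 2%N + F 3%N 3%N + F 4%N 4%N.
Proof. by rewrite /mxtrace sum5 !mxE !inordK. Qed.

Lemma mx_ext F G : (forall i j, (i < 5)%N -> (j < 5)%N -> F i j = G i j) -> mx F = mx G.
Proof. by move=> h; apply/matrixP => i j; rewrite !mxE h. Qed.

Lemma mxK (A : 'M[C]_5) : A = mx (fun i j => A (inord i) (inord j)).
Proof. by apply/matrixP => i j; rewrite mxE !inord_val. Qed.

Lemma mx_eqE F G : mx F = mx G -> forall i j, (i < 5)%N -> (j < 5)%N -> F i j = G i j.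
Proof. by move=> h i j hi hj; rewrite -mxE5 // h mxE5. Qed.

Lemma add_mx F G : mx F + mx G = mx (fun i j => F i j + G i j).
Proof. by apply/matrixP => i j; rewrite !mxE. Qed.
Lemma sub_mx F G : mx F - mx G = mx (fun i j => F i j - G i j).
Proof. by apply/matrixP => i j; rewrite !mxE. Qed.
Lemma scale_mx (a : C) F : a *: mx F = mx (fun i j => a * F i j).
Proof. by apply/matrixP => i j; rewrite !mxE. Qed.
Lemma zero_mx : (0 : 'M[C]_5) = mx (fun _ _ => 0).
Proof. by apply/matrixP => i j; rewrite !mxE. Qed.
Lemma opp_mx F : - mx F = mx (fun i j => - F i j).
Proof. by apply/matrixP => i j; rewrite !mxE. Qed.

Definition emat : nat -> nat -> C := fun i j =>
  match i, j with 0%N, 2%N => 1 | 1%N, 3%N => 1 | 2%N, 4%N => 1 | _, _ => 0 end.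

Lemma e32E : e32 C = mx emat.
Proof.
rewrite /e32 /Xroot /ord5; apply/matrixP => i j; rewrite !mxE.
case: i j => [[|[|[|[|[|i]]]]] hi] [[|[|[|[|[|j]]]]] hj] //=;
  by rewrite -!(inj_eq val_inj) /= !inordK //= ?addr0 ?add0r.
Qed.

End Infra.
Ltac ent := move=> [|[|[|[|[|?]]]]] [|[|[|[|[|?]]]]] // _ _.

Section Comb.
Variable C : numClosedFieldType.
Lemma comb1 {v E1 c1 : C} : E1 = 0 -> v = c1 * E1 -> v = 0.
Proof. by move=> -> ->; rewrite mulr0. Qed.
Lemma comb2 {v E1 E2 c1 c2 : C} : E1 = 0 -> E2 = 0 -> v = c1 * E1 + c2 * E2 -> v = 0.
Proof. by move=> -> -> ->; rewrite !mulr0 addr0. Qed.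
Lemma comb3 {v E1 E2 E3 c1 c2 c3 : C} : E1 = 0 -> E2 = 0 -> E3 = 0 -> v = c1 * E1 + c2 * E2 + c3 * E3 -> v = 0.
Proof. by move=> -> -> -> ->; rewrite !mulr0 !addr0. Qed.
End Comb.

Section Generic.
Variable C : numClosedFieldType.
Implicit Types A B D W : 'M[C]_5.

Lemma lieDl A B D : lie (A + B) D = lie A D + lie B D.
Proof. by rewrite /lie mulmxDl mulmxDr; rewrite opprD addrACA. Qed.
Lemma lieDr A B D : lie D (A + B) = lie D A + lie D B.
Proof. by rewrite /lie mulmxDl mulmxDr; rewrite opprD addrACA. Qed.
Lemma lieZl (a : C) A B : lie (a *: A) B = a *: lie A B.
Proof. by rewrite /lie -scalemxAl -scalemxAr scalerBr. Qed.
Lemma lieZr (a : C) A B : lie A (a *: B) = a *: lie A B.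
Proof. by rewrite /lie -scalemxAl -scalemxAr scalerBr. Qed.
Lemma lieNl A B : lie (- A) B = - lie A B.
Proof. by rewrite -scaleN1r lieZl scaleN1r. Qed.
Lemma lieNr A B : lie A (- B) = - lie A B.
Proof. by rewrite -scaleN1r lieZr scaleN1r. Qed.
Lemma lieBl A B D : lie (A - B) D = lie A D - lie B D.
Proof. by rewrite lieDl lieNl. Qed.
Lemma lieBr A B D : lie D (A - B) = lie D A - lie D B.
Proof. by rewrite lieDr lieNr. Qed.
Lemma lie0l A : lie 0 A = 0.
Proof. by rewrite /lie mul0mx mulmx0 subrr. Qed.
Lemma lie0r A : lie A 0 = 0.
Proof. by rewrite /lie mul0mx mulmx0 subrr. Qed.
Lemma lieC A B : lie A B = - lie B A.
Proof. by rewrite /lie opprB. Qed.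
Lemma lie_suml (I : finType) (F : I -> 'M[C]_5) B : lie (\sum_i F i) B = \sum_i lie (F i) B.
Proof.
elim/big_ind2: _ => //; first by rewrite lie0l.
by move=> x1 x2 y1 y2 <- <-; rewrite lieDl.
Qed.
Lemma lie_sumr (I : finType) (F : I -> 'M[C]_5) B : lie B (\sum_i F i) = \sum_i lie B (F i).
Proof.
elim/big_ind2: _ => //; first by rewrite lie0r.
by move=> x1 x2 y1 y2 <- <-; rewrite lieDr.
Qed.

Lemma killingDl A B D : killing (A + B) D = killing A D + killing B D.
Proof. by rewrite /killing mulmxDl mxtraceD mulrDr. Qed.
Lemma killingDr A B D : killing D (A + B) = killing D A + killing D B.
Proof. by rewrite /killing mulmxDr mxtraceD mulrDr. Qed.
Lemma killingZl (a : C) A B : killing (a *: A) B = a * killing A B.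
Proof. by rewrite /killing -scalemxAl mxtraceZ mulrCA. Qed.
Lemma killingZr (a : C) A B : killing A (a *: B) = a * killing A B.
Proof. by rewrite /killing -scalemxAr mxtraceZ mulrCA. Qed.
Lemma killingNl A B : killing (- A) B = - killing A B.
Proof. by rewrite -scaleN1r killingZl mulN1r. Qed.
Lemma killingNr A B : killing A (- B) = - killing A B.
Proof. by rewrite -scaleN1r killingZr mulN1r. Qed.
Lemma killingBl A B D : killing (A - B) D = killing A D - killing B D.
Proof. by rewrite killingDl killingNl. Qed.
Lemma killingBr A B D : killing D (A - B) = killing D A - killing D B.
Proof. by rewrite killingDr killingNr. Qed.
Lemma killing0l A : killing 0 A = 0.
Proof. by rewrite /killing mul0mx mxtrace0 mulr0. Qed.
Lemma killing0r A : killing A 0 = 0.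
Proof. by rewrite /killing mulmx0 mxtrace0 mulr0. Qed.
Lemma killingC A B : killing A B = killing B A.
Proof. by rewrite /killing mxtrace_mulC. Qed.
Lemma killing_suml (I : finType) (F : I -> 'M[C]_5) B : killing (\sum_i F i) B = \sum_i killing (F i) B.
Proof.
elim/big_ind2: _ => //; first by rewrite killing0l.
by move=> x1 x2 y1 y2 <- <-; rewrite killingDl.
Qed.
Lemma killing_sumr (I : finType) (F : I -> 'M[C]_5) B : killing B (\sum_i F i) = \sum_i killing B (F i).
Proof.
elim/big_ind2: _ => //; first by rewrite killing0r.
by move=> x1 x2 y1 y2 <- <-; rewrite killingDr.
Qed.

Lemma killing_lie A B D : killing A (lie B D) = killing (lie A B) D.
Proof.
rewrite /killing /lie mulmxBr mulmxBl !raddfB /=; congr (_ * _).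
rewrite !mulmxA; congr (_ - _); rewrite mxtrace_mulC mulmxA //.
Qed.

Lemma tr_lie A B : \tr (lie A B) = 0.
Proof. by rewrite /lie raddfB /= mxtrace_mulC subrr. Qed.

Lemma in_sl5_lie A B : in_sl5 (lie A B).
Proof. exact: tr_lie. Qed.

Lemma in_sl5D A B : in_sl5 A -> in_sl5 B -> in_sl5 (A + B).
Proof. by rewrite /in_sl5 mxtraceD => -> ->; rewrite addr0. Qed.
Lemma in_sl5Z (a : C) A : in_sl5 A -> in_sl5 (a *: A).
Proof. by rewrite /in_sl5 mxtraceZ => ->; rewrite mulr0. Qed.
Lemma in_sl50 : in_sl5 (0 : 'M[C]_5).
Proof. by rewrite /in_sl5 mxtrace0. Qed.
Lemma in_sl5N A : in_sl5 A -> in_sl5 (- A).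
Proof. by rewrite /in_sl5 raddfN /= => ->; rewrite oppr0. Qed.
Lemma in_sl5_sum (I : finType) (F : I -> 'M[C]_5) : (forall i, in_sl5 (F i)) -> in_sl5 (\sum_i F i).
Proof.
move=> h; elim/big_ind: _ => //; first exact: in_sl50.
by move=> ? ? ; apply: in_sl5D.
Qed.

Lemma tr_delta (A : 'M[C]_5) (a b : 'I_5) : \tr (A *m delta_mx a b) = A b a.
Proof.
rewrite /mxtrace (bigD1 b) //= big1 ?addr0.
  rewrite mxE (bigD1 a) //= big1 ?addr0 ?mxE ?eqxx ?mulr1 //.
  by move=> k /negPf nk; rewrite mxE nk mulr0.
move=> i /negPf ni; rewrite mxE big1 // => k _; rewrite mxE ni andbF mulr0 //.
Qed.

Lemma mxtrace_delta (a b : 'I_5) : \tr (delta_mx a b : 'M[C]_5) = (a == b)%:R.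
Proof.
rewrite /mxtrace (bigD1 a) //= big1 ?addr0 ?mxE ?eqxx //.
by move=> i /negPf ni; rewrite mxE ni.
Qed.

Lemma nat_neq0 (n : nat) : (n.+1%:R : C) != 0.
Proof. by rewrite pnatr_eq0. Qed.

Lemma nondeg_sl5 (T : 'M[C]_5) : in_sl5 T -> (forall V, in_sl5 V -> killing T V = 0) -> T = 0.
Proof.
move=> trT h.
have hk : forall V, in_sl5 V -> \tr (T *m V) = 0.
  by move=> V /h; rewrite /killing => /eqP; rewrite mulf_eq0 (negPf (nat_neq0 9)) /= => /eqP.
have off : forall a b : 'I_5, a != b -> T a b = 0.
  move=> a b ab; rewrite -tr_delta hk //.
  by rewrite /in_sl5 mxtrace_delta eq_sym (negPf ab).
have dg : forall a b : 'I_5, T a a = T b b.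
  move=> a b; have [->//|ab] := eqVneq a b.
  apply/eqP; rewrite -subr_eq0; apply/eqP.
  rewrite -tr_delta -tr_delta -raddfB /= -mulmxBr hk //.
  by rewrite /in_sl5 raddfB /= !mxtrace_delta !eqxx subrr.
apply/matrixP => a b; rewrite mxE.
have [<-|ab] := eqVneq a b; last exact: off.
move: trT; rewrite /in_sl5 /mxtrace (eq_bigr (fun=> T a a)); last by move=> i _; rewrite (dg i a).
rewrite sumr_const card_ord => /eqP; rewrite -mulr_natr mulf_eq0 (negPf (nat_neq0 4)) orbF.
by move/eqP.
Qed.

End Generic.
Section Solve.
Variable C : numClosedFieldType.
Lemma solve_var {v r L R c : C} : L = R -> v - r = c * (L - R) -> v = r.
Proof. by move=> -> /eqP; rewrite subrr mulr0 subr_eq0 => /eqP. Qed.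
Lemma sum8n (T : zmodType) (F : nat -> T) : \sum_(k < 8) F k = F 0%N + F 1%N + F 2%N + F 3%N + F 4%N + F 5%N + F 6%N + F 7%N.
Proof. by rewrite !big_ord_recr big_ord0 /= add0r. Qed.
End Solve.
Section Sum8.
Lemma sum8 (T : zmodType) (u : 'I_8 -> T) : \sum_k u k =
  u (inord 0) + u (inord 1) + u (inord 2) + u (inord 3) + u (inord 4) + u (inord 5) + u (inord 6) + u (inord 7).
Proof.
rewrite !big_ord_recr big_ord0 /= add0r.
by congr (_ + _ + _ + _ + _ + _ + _ + _); congr u; apply/val_inj; rewrite /= inordK.
Qed.
End Sum8.

Section Expl1.
Variable C : numClosedFieldType.
Local Notation mx := (@mx C).
Definition vmx (a00 a01 a02 a03 a04 a10 a11 a12 a13 a14 a20 a21 a22 a23 a24 a30 a31 a32 a33 a34 a40 a41 a42 a43 a44 : C) : 'M[C]_5 := mx (fun i j => match i, j with 0%N, 0%N => a00 | 0%N, 1%N => a01 | 0%N, 2%N => a02 | 0%N, 3%N => a03 | 0%N, 4%N => a04 | 1%N, 0%N => a10 | 1%N, 1%N => a11 | 1%N, 2%N => a12 | 1%N, 3%N => a13 | 1%N, 4%N => a14 | 2%N, 0%N => a20 | 2%N, 1%N => a21 | 2%N, 2%N => a22 | 2%N, 3%N => a23 | 2%N, 4%N => a24 | 3%N, 0%N => a30 | 3%N, 1%N => a31 | 3%N, 2%N => a32 | 3%N, 3%N => a33 | 3%N, 4%N => a34 | 4%N, 0%N => a40 | 4%N, 1%N => a41 | 4%N, 2%N => a42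 | 4%N, 3%N => a43 | 4%N, 4%N => a44 | _, _ => 0 end).
Lemma vmxK (A : 'M[C]_5) : A = vmx (A (inord 0) (inord 0)) (A (inord 0) (inord 1)) (A (inord 0) (inord 2)) (A (inord 0) (inord 3)) (A (inord 0) (inord 4)) (A (inord 1) (inord 0)) (A (inord 1) (inord 1)) (A (inord 1) (inord 2)) (A (inord 1) (inord 3)) (A (inord 1) (inord 4)) (A (inord 2) (inord 0)) (A (inord 2) (inord 1)) (A (inord 2) (inord 2)) (A (inord 2) (inord 3)) (A (inord 2) (inord 4)) (A (inord 3) (inord 0)) (A (inord 3) (inord 1)) (A (inord 3) (inord 2)) (A (inord 3) (inord 3)) (A (inord 3) (inord 4)) (A (inord 4) (inord 0)) (A (inord 4) (inord 1)) (A (inord 4) (inord 2)) (A (inord 4) (inord 3)) (A (inord 4) (inord 4)).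
Proof. by rewrite {1}[A]mxK; apply: mx_ext; ent. Qed.
Definition f0m : 'M[C]_5 := mx (fun i j => match i, j with 2%N, 0%N => (2) | 3%N, 1%N => (1) | 4%N, 2%N => (2) | _, _ => 0 end).
Definition em : 'M[C]_5 := mx (fun i j => match i, j with 0%N, 2%N => (1) | 1%N, 3%N => (1) | 2%N, 4%N => (1) | _, _ => 0 end).
Definition h0m : 'M[C]_5 := mx (fun i j => match i, j with 0%N, 0%N => (2) | 1%N, 1%N => (1) | 3%N, 3%N => ((-1)) | 4%N, 4%N => ((-2)) | _, _ => 0 end).
Definition Bg (a : nat) : 'M[C]_5 := match a with 0%N => mx (fun i j => match i, j with 0%N, 3%N => (1) | _, _ => 0 end) | 1%N => mx (fun i j => match i, j with 0%N, 4%N => (1) | _, _ => 0 end) | 2%N => mx (fun i j => match i, j with 1%N, 3%N => (1) | _, _ => 0 end) | 3%N => mx (fun i j => match i, j with 1%N, 4%N => (1) | _, _ => 0 end) | 4%N => mx (fun i j => match i, j with 0%N, 1%N => (1) | 2%N, 3%N => (1) | _, _ => 0 end) | 5%N => mx (fun i j => match i, j with 0%N, 2%N => (1) | 2%N, 4%N => (1) | _, _ => 0 end) | 6%N => mx (fun i j => match i, j with 1%N, 2%N => (1) | 3%N, 4%N => (1) | _, _ => 0 end) | 7%N => mx (fun i j => match i, j with 0%N, 0%N => ((-2)) | 1%N, 1%N => (3) | 2%N, 2%N => ((-2)) | 3%N, 3%N => (3) | 4%N, 4%N => ((-2)) | _, _ => 0 end) | _ => 0 end.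
Definition Gb (a : nat) : 'M[C]_5 := match a with 0%N => mx (fun i j => match i, j with 3%N, 0%N => (1) | _, _ => 0 end) | 1%N => mx (fun i j => match i, j with 3%N, 1%N => (1) | _, _ => 0 end) | 2%N => mx (fun i j => match i, j with 1%N, 0%N => (2) | 3%N, 2%N => (1) | _, _ => 0 end) | 3%N => mx (fun i j => match i, j with 4%N, 0%N => (1) | _, _ => 0 end) | 4%N => mx (fun i j => match i, j with 4%N, 1%N => (1) | _, _ => 0 end) | 5%N => mx (fun i j => match i, j with 2%N, 0%N => (1) | 4%N, 2%N => (1) | _, _ => 0 end) | 6%N => mx (fun i j => match i, j with 2%N, 1%N => (1) | 4%N, 3%N => (2) | _, _ => 0 end) | 7%N => mx (fun i j => match i, j with 0%N, 0%N => ((-2)) | 1%N, 1%N => (3) | 2%N, 2%N => ((-2)) | 3%N, 3%N => (3) | 4%N, 4%N => ((-2)) | _, _ => 0 end) | _ => 0 end.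
Lemma em_e32 : e32 C = em. Proof. by rewrite e32E. Qed.
Lemma lie_e_f0 : lie em f0m = h0m.
Proof. rewrite /em /f0m /h0m lie_mx; apply: mx_ext; ent; rewrite /mul5 /=; ring. Qed.
Lemma lie_h0_e : lie h0m em = 2%:R *: em.
Proof. rewrite /em /h0m lie_mx scale_mx; apply: mx_ext; ent; rewrite /mul5 /=; ring. Qed.
Lemma lie_h0_f0 : lie h0m f0m = - (2%:R *: f0m).
Proof. rewrite /f0m /h0m lie_mx scale_mx opp_mx; apply: mx_ext; ent; rewrite /mul5 /=; ring. Qed.
Lemma tr_f0 : in_sl5 f0m. Proof. by rewrite /in_sl5 /f0m tr_mx /=; ring. Qed.
Lemma tr_h0 : in_sl5 h0m. Proof. by rewrite /in_sl5 /h0m tr_mx /=; ring. Qed.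
Lemma tr_em : in_sl5 em. Proof. by rewrite /in_sl5 /em tr_mx /=; ring. Qed.
Lemma Bg_cent (a : nat) : (a < 8)%N -> centralizer em (Bg a).
Proof.
rewrite /centralizer /in_sl5.
do 8 (case: a => [|a]; first by move=> _; rewrite /Bg tr_mx /em lie_mx zero_mx; split; [ring| apply: mx_ext; ent; rewrite /mul5 /=; ring]).
by [].
Qed.
Lemma Gb_cent (a : nat) : (a < 8)%N -> in_sl5 (Gb a) /\ lie f0m (Gb a) = 0.
Proof.
rewrite /in_sl5.
do 8 (case: a => [|a]; first by move=> _; rewrite /Gb tr_mx /f0m lie_mx zero_mx; split; [ring| apply: mx_ext; ent; rewrite /mul5 /=; ring]).
by [].
Qed.
Definition K0 (a b : nat) : C := match a, b with 0%N, 0%N => (10) | 1%N, 2%N => (10) | 2%N, 4%N => (30) | 3%N, 1%N => (10) | 4%N, 3%N => (10) | 5%N, 5%N => (20) | 6%N, 6%N => (30) | 7%N, 7%N => (300) | _, _ => 0 end.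
Lemma K0E (a b : nat) : (a < 8)%N -> (b < 8)%N -> killing (Gb a) (Bg b) = K0 a b.
Proof.
rewrite /killing.
do 8 (case: a => [|a]; [do 8 (case: b => [|b]; first by move=> _ _; rewrite /Gb /Bg mul_mx tr_mx /mul5 /=; ring); by [] | ]).
by [].
Qed.
End Expl1.

Section Expl2.
Variable C : numClosedFieldType.
Local Notation mx := (@mx C).
Local Notation vmx := (@vmx C).
Local Notation em := (@em C).
Local Notation f0m := (@f0m C).
Local Notation Bg := (@Bg C).
Local Notation Gb := (@Gb C).
Definition gec (A : 'M[C]_5) (k : nat) : C := match k with 0%N => A (inord 0) (inord 3) | 1%N => A (inord 0) (inord 4) | 2%N => A (inord 1) (inord 3) | 3%N => A (inord 1) (inord 4) | 4%N => A (inord 0) (inord 1) | 5%N => A (inord 0) (inord 2) | 6%N => A (inord 1) (inord 2) | 7%N => - (A (inord 0) (inord 0) / 2) | _ => 0 end.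
Definition gfc (A : 'M[C]_5) (k : nat) : C := match k with 0%N => A (inord 3) (inord 0) | 1%N => A (inord 3) (inord 1) | 2%N => A (inord 3) (inord 2) | 3%N => A (inord 4) (inord 0) | 4%N => A (inord 4) (inord 1) | 5%N => A (inord 4) (inord 2) | 6%N => A (inord 4) (inord 3) / 2 | 7%N => - (A (inord 0) (inord 0) / 2) | _ => 0 end.
Lemma span_ge_explicit (a00 a01 a02 a03 a04 a10 a11 a12 a13 a14 a20 a21 a22 a23 a24 a30 a31 a32 a33 a34 a40 a41 a42 a43 a44 : C) : \tr (vmx a00 a01 a02 a03 a04 a10 a11 a12 a13 a14 a20 a21 a22 a23 a24 a30 a31 a32 a33 a34 a40 a41 a42 a43 a44) = 0 -> lie (vmx a00 a01 a02 a03 a04 a10 a11 a12 a13 a14 a20 a21 a22 a23 a24 a30 a31 a32 a33 a34 a40 a41 a42 a43 a44) em = 0 ->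
  vmx a00 a01 a02 a03 a04 a10 a11 a12 a13 a14 a20 a21 a22 a23 a24 a30 a31 a32 a33 a34 a40 a41 a42 a43 a44 = \sum_(k < 8) gec (vmx a00 a01 a02 a03 a04 a10 a11 a12 a13 a14 a20 a21 a22 a23 a24 a30 a31 a32 a33 a34 a40 a41 a42 a43 a44) k *: Bg k.
Proof.
rewrite (sum8n (fun k => gec (vmx a00 a01 a02 a03 a04 a10 a11 a12 a13 a14 a20 a21 a22 a23 a24 a30 a31 a32 a33 a34 a40 a41 a42 a43 a44) k *: Bg k)) /gec !mxE5 // /Bg !scale_mx !add_mx.
rewrite tr_mx /= => T.
rewrite /vmx /em /f0m lie_mx zero_mx => /mx_eqE L.
have L00 := L 0%N 0%N isT isT; rewrite /mul5 /= in L00.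
have L01 := L 0%N 1%N isT isT; rewrite /mul5 /= in L01.
have L02 := L 0%N 2%N isT isT; rewrite /mul5 /= in L02.
have L03 := L 0%N 3%N isT isT; rewrite /mul5 /= in L03.
have L04 := L 0%N 4%N isT isT; rewrite /mul5 /= in L04.
have L10 := L 1%N 0%N isT isT; rewrite /mul5 /= in L10.
have L11 := L 1%N 1%N isT isT; rewrite /mul5 /= in L11.
have L12 := L 1%N 2%N isT isT; rewrite /mul5 /= in L12.
have L13 := L 1%N 3%N isT isT; rewrite /mul5 /= in L13.
have L14 := L 1%N 4%N isT isT; rewrite /mul5 /= in L14.
have L20 := L 2%N 0%N isT isT; rewrite /mul5 /= in L20.
have L21 := L 2%N 1%N isT isT; rewrite /mul5 /= in L21.
have L22 := L 2%N 2%N isT isT; rewrite /mul5 /= in L22.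
have L23 := L 2%N 3%N isT isT; rewrite /mul5 /= in L23.
have L24 := L 2%N 4%N isT isT; rewrite /mul5 /= in L24.
have L32 := L 3%N 2%N isT isT; rewrite /mul5 /= in L32.
have L33 := L 3%N 3%N isT isT; rewrite /mul5 /= in L33.
have L34 := L 3%N 4%N isT isT; rewrite /mul5 /= in L34.
have L42 := L 4%N 2%N isT isT; rewrite /mul5 /= in L42.
have L43 := L 4%N 3%N isT isT; rewrite /mul5 /= in L43.
have L44 := L 4%N 4%N isT isT; rewrite /mul5 /= in L44.
clear L.
have Ea20 : a20 = 0 by apply: (solve_var (c := (-1)) L00); field.
subst a20.
have Ea21 : a21 = 0 by apply: (solve_var (c := (-1)) L01); field.
subst a21.
have Ea30 : a30 = 0 by apply: (solve_var (c := (-1)) L10); field.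
subst a30.
have Ea31 : a31 = 0 by apply: (solve_var (c := (-1)) L11); field.
subst a31.
have Ea40 : a40 = 0 by apply: (solve_var (c := (-1)) L20); field.
subst a40.
have Ea41 : a41 = 0 by apply: (solve_var (c := (-1)) L21); field.
subst a41.
have Ea42 : a42 = 0 by apply: (solve_var (c := (-1)) L22); field.
subst a42.
have Ea43 : a43 = 0 by apply: (solve_var (c := (-1)) L23); field.
subst a43.
have Ea32 : a32 = 0 by apply: (solve_var (c := 1) L34); field.
subst a32.
have Ea10 : a10 = 0 by apply: (solve_var (c := 1) L12); field.
subst a10.
have Ea00 : a00 = (a22) by apply: (solve_var (c := 1) L02); field.
subst a00.
have Ea01 : a01 = (a23) by apply: (solve_var (c := 1) L03); field.
subst a01.
have Ea02 : a02 = (a24) by apply: (solve_var (c := 1) L04); field.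
subst a02.
have Ea11 : a11 = (a33) by apply: (solve_var (c := 1) L13); field.
subst a11.
have Ea12 : a12 = (a34) by apply: (solve_var (c := 1) L14); field.
subst a12.
have Ea22 : a22 = (a44) by apply: (solve_var (c := 1) L24); field.
subst a22.
have Ea33 : a33 = ((-(3/2))*a44) by apply: (solve_var (c := (1/2)) T); field.
subst a33.
by apply: mx_ext; ent; rewrite /=; field.
Qed.
Lemma span_gf_explicit (a00 a01 a02 a03 a04 a10 a11 a12 a13 a14 a20 a21 a22 a23 a24 a30 a31 a32 a33 a34 a40 a41 a42 a43 a44 : C) : \tr (vmx a00 a01 a02 a03 a04 a10 a11 a12 a13 a14 a20 a21 a22 a23 a24 a30 a31 a32 a33 a34 a40 a41 a42 a43 a44) = 0 -> lie f0m (vmx a00 a01 a02 a03 a04 a10 a11 a12 a13 a14 a20 a21 a22 a23 a24 a30 a31 a32 a33 a34 a40 a41 a42 a43 a44) = 0 ->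
  vmx a00 a01 a02 a03 a04 a10 a11 a12 a13 a14 a20 a21 a22 a23 a24 a30 a31 a32 a33 a34 a40 a41 a42 a43 a44 = \sum_(k < 8) gfc (vmx a00 a01 a02 a03 a04 a10 a11 a12 a13 a14 a20 a21 a22 a23 a24 a30 a31 a32 a33 a34 a40 a41 a42 a43 a44) k *: Gb k.
Proof.
rewrite (sum8n (fun k => gfc (vmx a00 a01 a02 a03 a04 a10 a11 a12 a13 a14 a20 a21 a22 a23 a24 a30 a31 a32 a33 a34 a40 a41 a42 a43 a44) k *: Gb k)) /gfc !mxE5 // /Gb !scale_mx !add_mx.
rewrite tr_mx /= => T.
rewrite /vmx /em /f0m lie_mx zero_mx => /mx_eqE L.
have L00 := L 0%N 0%N isT isT; rewrite /mul5 /= in L00.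
have L01 := L 0%N 1%N isT isT; rewrite /mul5 /= in L01.
have L02 := L 0%N 2%N isT isT; rewrite /mul5 /= in L02.
have L10 := L 1%N 0%N isT isT; rewrite /mul5 /= in L10.
have L11 := L 1%N 1%N isT isT; rewrite /mul5 /= in L11.
have L12 := L 1%N 2%N isT isT; rewrite /mul5 /= in L12.
have L20 := L 2%N 0%N isT isT; rewrite /mul5 /= in L20.
have L21 := L 2%N 1%N isT isT; rewrite /mul5 /= in L21.
have L22 := L 2%N 2%N isT isT; rewrite /mul5 /= in L22.
have L23 := L 2%N 3%N isT isT; rewrite /mul5 /= in L23.
have L24 := L 2%N 4%N isT isT; rewrite /mul5 /= in L24.
have L30 := L 3%N 0%N isT isT; rewrite /mul5 /= in L30.
have L31 := L 3%N 1%N isT isT; rewrite /mul5 /= in L31.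
have L32 := L 3%N 2%N isT isT; rewrite /mul5 /= in L32.
have L33 := L 3%N 3%N isT isT; rewrite /mul5 /= in L33.
have L34 := L 3%N 4%N isT isT; rewrite /mul5 /= in L34.
have L40 := L 4%N 0%N isT isT; rewrite /mul5 /= in L40.
have L41 := L 4%N 1%N isT isT; rewrite /mul5 /= in L41.
have L42 := L 4%N 2%N isT isT; rewrite /mul5 /= in L42.
have L43 := L 4%N 3%N isT isT; rewrite /mul5 /= in L43.
have L44 := L 4%N 4%N isT isT; rewrite /mul5 /= in L44.
clear L.
have Ea02 : a02 = 0 by apply: (solve_var (c := (-(1/2))) L00); field.
subst a02.
have Ea03 : a03 = 0 by apply: (solve_var (c := (-1)) L01); field.
subst a03.
have Ea04 : a04 = 0 by apply: (solve_var (c := (-(1/2))) L02); field.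
subst a04.
have Ea12 : a12 = 0 by apply: (solve_var (c := (-(1/2))) L10); field.
subst a12.
have Ea13 : a13 = 0 by apply: (solve_var (c := (-1)) L11); field.
subst a13.
have Ea14 : a14 = 0 by apply: (solve_var (c := (-(1/2))) L12); field.
subst a14.
have Ea24 : a24 = 0 by apply: (solve_var (c := (-(1/2))) L22); field.
subst a24.
have Ea34 : a34 = 0 by apply: (solve_var (c := (-(1/2))) L32); field.
subst a34.
have Ea23 : a23 = 0 by apply: (solve_var (c := (1/2)) L43); field.
subst a23.
have Ea01 : a01 = 0 by apply: (solve_var (c := (1/2)) L21); field.
subst a01.
have Ea00 : a00 = (a22) by apply: (solve_var (c := (1/2)) L20); field.
subst a00.
have Ea10 : a10 = (2*a32) by apply: (solve_var (c := 1) L30); field.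
subst a10.
have Ea11 : a11 = (a33) by apply: (solve_var (c := 1) L31); field.
subst a11.
have Ea20 : a20 = (a42) by apply: (solve_var (c := (1/2)) L40); field.
subst a20.
have Ea21 : a21 = ((1/2)*a43) by apply: (solve_var (c := (1/2)) L41); field.
subst a21.
have Ea22 : a22 = (a44) by apply: (solve_var (c := (1/2)) L42); field.
subst a22.
have Ea33 : a33 = ((-(3/2))*a44) by apply: (solve_var (c := (1/2)) T); field.
subst a33.
by apply: mx_ext; ent; rewrite /=; field.
Qed.
End Expl2.

Section Expl3.
Variable C : numClosedFieldType.
Local Notation mx := (@mx C).
Local Notation vmx := (@vmx C).
Local Notation em := (@em C).
Local Notation f0m := (@f0m C).
Local Notation Bg := (@Bg C).
Local Notation Gb := (@Gb C).
Definition xmat (y0 y1 y2 y3 y4 y5 y6 y7 : C) : 'M[C]_5 := mx (fun i j => match i, j with 0%N, 0%N => ((-2)*y7) | 0%N, 2%N => (1) | 1%N, 0%N => (2*y2) | 1%N, 1%N => (3*y7) | 1%N, 3%N => (1) | 2%N, 0%N => (y5) | 2%N, 1%N => (y6) | 2%N, 2%N => ((-2)*y7) | 2%N, 4%N => (1) | 3%N, 0%N => (y0) | 3%N, 1%N => (y1) | 3%N, 2%N => (y2) | 3%N, 3%N => (3*y7) | 4%N, 0%N => (y3) | 4%N, 1%N => (y4) | 4%N, 2%N => (y5) | 4%N, 3%N => (2*y6) | 4%N, 4%N => ((-2)*y7) | _, _ => 0 end).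
Definition Umat (l10 l20 l21 l30 l31 l32 l40 l41 l42 l43 ua ub uc d0 d1 d2 : C) : 'M[C]_5 := mx (fun i j => match i, j with 0%N, 0%N => (d0) | 0%N, 1%N => (ua) | 0%N, 2%N => (ub) | 1%N, 0%N => (l10) | 1%N, 1%N => (d1) | 1%N, 2%N => ((-2)*uc) | 2%N, 0%N => (l20) | 2%N, 1%N => (l21) | 2%N, 2%N => (d2) | 2%N, 3%N => ((-2)*ua) | 2%N, 4%N => ((-1)*ub) | 3%N, 0%N => (l30) | 3%N, 1%N => (l31) | 3%N, 2%N => (l32) | 3%N, 3%N => ((-1)*d1) | 3%N, 4%N => (uc) | 4%N, 0%N => (l40) | 4%N, 1%N => (l41) | 4%N, 2%N => (l42) | 4%N, 3%N => (l43) | 4%N, 4%N => ((-1)*d2 + (-1)*d0) | _, _ => 0 end).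
Lemma xmat_eq (y : 'I_8 -> C) : em + \sum_k y k *: Gb k = xmat (y (inord 0)) (y (inord 1)) (y (inord 2)) (y (inord 3)) (y (inord 4)) (y (inord 5)) (y (inord 6)) (y (inord 7)).
Proof. rewrite sum8 !inordK // /Gb /em /xmat !scale_mx !add_mx; apply: mx_ext; ent; rewrite /=; ring. Qed.
Lemma img_form_explicit (a00 a01 a02 a03 a04 a10 a11 a12 a13 a14 a20 a21 a22 a23 a24 a30 a31 a32 a33 a34 a40 a41 a42 a43 a44 : C) : lie f0m (vmx a00 a01 a02 a03 a04 a10 a11 a12 a13 a14 a20 a21 a22 a23 a24 a30 a31 a32 a33 a34 a40 a41 a42 a43 a44) = Umat ((lie f0m (vmx a00 a01 a02 a03 a04 a10 a11 a12 a13 a14 a20 a21 a22 a23 a24 a30 a31 a32 a33 a34 a40 a41 a42 a43 a44)) (inord 1) (inord 0)) ((lie f0m (vmx a00 a01 a02 a03 a04 a10 a11 a12 a13 a14 a20 a21 a22 a23 a24 a30 a31 a32 a33 a34 a40 a41 a42 a43 a44)) (inord 2) (inord 0)) ((lie f0m (vmx a00 a01 a02 a03 a04 a10 a11 a12 a13 a14 a20 a21 a22 a23 a24 a30 a31 a32 a33 a34 a40 a41 a42 a43 a44)) (inord 2) (inord 1)) ((lie f0m (vmx a00 a01 a02 a03 a04 a10 a11 a12 a13 a14 a20 a21 a22 a23 a24 a30 a31 a32 a33 a34 a40 a41 a42 a43 a44)) (inord 3) (inord 0)) ((lie f0m (vmx a00 a01 a02 a03 a04 a10 a11 a12 a13 a14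 a20 a21 a22 a23 a24 a30 a31 a32 a33 a34 a40 a41 a42 a43 a44)) (inord 3) (inord 1)) ((lie f0m (vmx a00 a01 a02 a03 a04 a10 a11 a12 a13 a14 a20 a21 a22 a23 a24 a30 a31 a32 a33 a34 a40 a41 a42 a43 a44)) (inord 3) (inord 2)) ((lie f0m (vmx a00 a01 a02 a03 a04 a10 a11 a12 a13 a14 a20 a21 a22 a23 a24 a30 a31 a32 a33 a34 a40 a41 a42 a43 a44)) (inord 4) (inord 0)) ((lie f0m (vmx a00 a01 a02 a03 a04 a10 a11 a12 a13 a14 a20 a21 a22 a23 a24 a30 a31 a32 a33 a34 a40 a41 a42 a43 a44)) (inord 4) (inord 1)) ((lie f0m (vmx a00 a01 a02 a03 a04 a10 a11 a12 a13 a14 a20 a21 a22 a23 a24 a30 a31 a32 a33 a34 a40 a41 a42 a43 a44)) (inord 4) (inord 2)) ((lie f0m (vmx a00 a01 a02 a03 a04 a10 a11 a12 a13 a14 a20 a21 a22 a23 a24 a30 a31 a32 a33 a34 a40 a41 a42 a43 a44)) (inord 4) (inord 3)) ((lie f0m (vmx a00 a01 a02 a03 a04 a10 a11 a12 a13 a14 a20 a21 a22 a23 a24 a30 a31 a32 a33 a34 a40 a41 a42 a43 a44)) (inord 0) (inord 1)) ((lie f0m (vmx a00 a01 a02 a03 a04 a10 a11 a12 a13 a14 a20 a21 a22 a23 a24 a30 a31 a32 a33 a34 a40 a41 a42 a43 a44)) (inord 0) (inord 2)) ((lie f0m (vmx a00 a01 a02 a03 a04 a10 a11 a12 a13 a14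 a20 a21 a22 a23 a24 a30 a31 a32 a33 a34 a40 a41 a42 a43 a44)) (inord 3) (inord 4)) ((lie f0m (vmx a00 a01 a02 a03 a04 a10 a11 a12 a13 a14 a20 a21 a22 a23 a24 a30 a31 a32 a33 a34 a40 a41 a42 a43 a44)) (inord 0) (inord 0)) ((lie f0m (vmx a00 a01 a02 a03 a04 a10 a11 a12 a13 a14 a20 a21 a22 a23 a24 a30 a31 a32 a33 a34 a40 a41 a42 a43 a44)) (inord 1) (inord 1)) ((lie f0m (vmx a00 a01 a02 a03 a04 a10 a11 a12 a13 a14 a20 a21 a22 a23 a24 a30 a31 a32 a33 a34 a40 a41 a42 a43 a44)) (inord 2) (inord 2)).
Proof. rewrite /f0m /vmx lie_mx !mxE5 // /Umat; apply: mx_ext; ent; rewrite /mul5 /=; ring. Qed.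
Lemma nondeg_explicit (y0 y1 y2 y3 y4 y5 y6 y7 : C) (l10 l20 l21 l30 l31 l32 l40 l41 l42 l43 ua ub uc d0 d1 d2 : C) :
  lie (lie (xmat y0 y1 y2 y3 y4 y5 y6 y7) (Umat l10 l20 l21 l30 l31 l32 l40 l41 l42 l43 ua ub uc d0 d1 d2)) f0m = 0 -> Umat l10 l20 l21 l30 l31 l32 l40 l41 l42 l43 ua ub uc d0 d1 d2 = 0.
Proof.
rewrite /xmat /Umat /f0m !lie_mx zero_mx => /mx_eqE E.
have H00 := E 0%N 0%N isT isT; rewrite /mul5 /= in H00.
have H01 := E 0%N 1%N isT isT; rewrite /mul5 /= in H01.
have H02 := E 0%N 2%N isT isT; rewrite /mul5 /= in H02.
have H10 := E 1%N 0%N isT isT; rewrite /mul5 /= in H10.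
have H11 := E 1%N 1%N isT isT; rewrite /mul5 /= in H11.
have H12 := E 1%N 2%N isT isT; rewrite /mul5 /= in H12.
have H20 := E 2%N 0%N isT isT; rewrite /mul5 /= in H20.
have H21 := E 2%N 1%N isT isT; rewrite /mul5 /= in H21.
have H22 := E 2%N 2%N isT isT; rewrite /mul5 /= in H22.
have H30 := E 3%N 0%N isT isT; rewrite /mul5 /= in H30.
have H31 := E 3%N 1%N isT isT; rewrite /mul5 /= in H31.
have H32 := E 3%N 2%N isT isT; rewrite /mul5 /= in H32.
have H40 := E 4%N 0%N isT isT; rewrite /mul5 /= in H40.
have H41 := E 4%N 1%N isT isT; rewrite /mul5 /= in H41.
have H42 := E 4%N 2%N isT isT; rewrite /mul5 /= in H42.
have H43 := E 4%N 3%N isT isT; rewrite /mul5 /= in H43.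
clear E.
have ua0 : ua = 0 by apply: (comb1 (c1 := (-(1/3))) H01); field.
subst ua.
have ub0 : ub = 0 by apply: (comb1 (c1 := (-(1/4))) H02); field.
subst ub.
have l210 : l21 = 0 by apply: (comb2 (c1 := (-(1/2))) (c2 := (-(1/4))) H21 H43); field.
subst l21.
have l430 : l43 = 0 by apply: (comb1 (c1 := 1) H21); field.
subst l43.
have uc0 : uc = 0 by apply: (comb1 (c1 := (1/6)) H12); field.
subst uc.
have l100 : l10 = 0 by apply: (comb2 (c1 := (-(3/4))) (c2 := (-(1/2))) H10 H32); field.
subst l10.
have l200 : l20 = 0 by apply: (comb2 (c1 := (-(1/3))) (c2 := (-(1/6))) H20 H42); field.
subst l20.
have l310 : l31 = 0 by apply: (comb1 (c1 := (-(1/2))) H31); field.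
subst l31.
have l320 : l32 = 0 by apply: (comb1 (c1 := (1/2)) H10); field.
subst l32.
have l420 : l42 = 0 by apply: (comb1 (c1 := (1/2)) H20); field.
subst l42.
have d00 : d0 = 0 by apply: (comb2 (c1 := (-(1/2))) (c2 := (-(1/6))) H00 H22); field.
subst d0.
have d10 : d1 = 0 by apply: (comb1 (c1 := (-(1/2))) H11); field.
subst d1.
have d20 : d2 = 0 by apply: (comb1 (c1 := (1/2)) H00); field.
subst d2.
have l300 : l30 = 0 by apply: (comb1 (c1 := (-(1/3))) H30); field.
subst l30.
have l400 : l40 = 0 by apply: (comb1 (c1 := (-(1/4))) H40); field.
subst l40.
have l410 : l41 = 0 by apply: (comb1 (c1 := (-(1/3))) H41); field.
subst l41.
by apply: mx_ext; ent; rewrite /=; ring.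
Qed.
End Expl3.

Section Expl4.
Variable C : numClosedFieldType.
Local Notation mx := (@mx C).
Local Notation vmx := (@vmx C).
Local Notation em := (@em C).
Local Notation f0m := (@f0m C).
Local Notation Bg := (@Bg C).
Local Notation Gb := (@Gb C).
Local Notation xmat := (@xmat C).
Definition Vm (a : nat) (y0 y1 y2 y3 y4 y5 y6 y7 : C) : 'M[C]_5 := match a with 0%N => mx (fun i j => match i, j with 0%N, 0%N => ((-(5/3))*y2*y7 + (1/2)*y0) | 0%N, 1%N => ((-(25/12))*y7*y7 + (-(1/4))*y5 + (3/4)*y1) | 0%N, 2%N => ((1/3)*y2) | 0%N, 3%N => ((5/3)*y7) | 1%N, 0%N => (2*y2*y2) | 1%N, 1%N => ((5/2)*y2*y7 + (-(1/12))*y0) | 1%N, 3%N => ((-1)*y2) | 2%N, 0%N => ((-(25/4))*y2*y7*y7 + (1/2)*y2*y5 + (1/4)*y1*y2 + (5/6)*y0*y7) | 2%N, 1%N => ((-(125/6))*y7*y7*y7 + (35/18)*y5*y7 + (1/6)*y3 + (-(2/3))*y2*y6 + (35/18)*y1*y7) | 2%N, 2%N => ((1/6)*y0) | 2%N, 3%N => ((25/6)*y7*y7 + (-(1/2))*y5 + (1/2)*y1) | 2%N, 4%N => ((1/6)*y2) | 3%N, 3%N => ((-(5/6))*y2*y7 + (-(7/12))*y0) | _, _ => 0 end) | 1%N => mx (fun i j => match i, j with 0%N, 0%N => (y3 + (-(4/3))*y2*y6) | 0%N, 1%N => ((-(5/6))*y6*y7 + (3/4)*y4) | 0%N, 2%N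 => ((1/6)*y5) | 0%N, 3%N => ((2/3)*y6) | 1%N, 0%N => ((-(50/3))*y2*y7*y7 + (14/9)*y2*y5 + (8/9)*y1*y2 + (5/3)*y0*y7) | 1%N, 1%N => ((-(3/4))*y3 + (7/3)*y2*y6) | 1%N, 2%N => ((-(5/3))*y2*y7 + (-(1/2))*y0) | 1%N, 4%N => ((-(2/3))*y2) | 2%N, 0%N => ((1/2)*y5*y5 + (-5)*y2*y6*y7 + (7/12)*y2*y4 + (7/12)*y0*y6) | 2%N, 1%N => ((-(25/3))*y6*y7*y7 + (7/9)*y5*y6 + (5/6)*y4*y7 + (4/9)*y1*y6) | 2%N, 2%N => ((1/2)*y3 + (-(2/3))*y2*y6) | 2%N, 3%N => ((5/3)*y6*y7 + (1/2)*y4) | 2%N, 4%N => ((-(1/6))*y5) | 3%N, 3%N => ((-(3/4))*y3 + (-(1/3))*y2*y6) | 3%N, 4%N => ((5/6)*y2*y7 + (-(3/4))*y0) | _, _ => 0 end) | 2%N => mx (fun i j => match i, j with 0%N, 1%N => ((-(1/4))*y6) | 1%N, 0%N => ((5/3)*y2*y7 + (1/3)*y0) | 1%N, 1%N => ((1/2)*y1) | 1%N, 2%N => ((1/2)*y2) | 2%N, 0%N => ((1/2)*y2*y6) | 2%N, 1%N => ((5/6)*y6*y7 + (1/6)*y4) | 2%N, 3%N => ((-(1/2))*y6) | 3%N, 3%N => ((-(1/2))*y1) | 3%N, 4%N => ((1/4)*y2) | _, _ => 0 end) | 3%N => mx (fun i j => match i, j with 0%N, 0%N => ((-(5/3))*y6*y7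 + (1/2)*y4) | 0%N, 2%N => ((-(1/6))*y6) | 1%N, 0%N => ((-(125/3))*y7*y7*y7 + (35/9)*y5*y7 + (1/3)*y3 + (-(4/3))*y2*y6 + (35/9)*y1*y7) | 1%N, 1%N => ((10/3)*y6*y7 + (-(1/6))*y4) | 1%N, 2%N => ((-(25/6))*y7*y7 + (1/2)*y5 + (-(1/2))*y1) | 1%N, 3%N => (y6) | 1%N, 4%N => ((-(5/3))*y7) | 2%N, 0%N => ((-(25/4))*y6*y7*y7 + (1/2)*y5*y6 + (5/6)*y4*y7 + (1/4)*y1*y6) | 2%N, 1%N => (y6*y6) | 2%N, 2%N => ((-(5/3))*y6*y7 + (1/3)*y4) | 2%N, 4%N => ((-(1/3))*y6) | 3%N, 3%N => ((-(2/3))*y4) | 3%N, 4%N => ((25/12)*y7*y7 + (1/4)*y5 + (-(3/4))*y1) | _, _ => 0 end) | 4%N => mx (fun i j => match i, j with 0%N, 0%N => (y2) | 0%N, 1%N => (5*y7) | 1%N, 1%N => ((-1)*y2) | 2%N, 0%N => ((1/4)*y0) | 2%N, 1%N => ((-(1/6))*y5 + (1/3)*y1) | 2%N, 2%N => ((1/2)*y2) | 2%N, 3%N => (5*y7) | 3%N, 3%N => ((-(1/2))*y2) | _, _ => 0 end) | 5%N => mx (fun i j => match i, j with 0%N, 0%N => (y5) | 0%N, 1%N => ((5/4)*y6) | 1%N, 0%N => ((-(5/3))*y2*y7 + (2/3)*y0) | 1%N, 1%N => ((-(3/4))*y5) | 1%N, 2%N => ((-(3/2))*y2) | 2%N, 0%N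 => ((1/2)*y3 + (-(1/2))*y2*y6) | 2%N, 1%N => ((-(5/6))*y6*y7 + (1/3)*y4) | 2%N, 2%N => ((1/2)*y5) | 2%N, 3%N => ((3/2)*y6) | 3%N, 3%N => ((-(3/4))*y5) | 3%N, 4%N => ((-(5/4))*y2) | _, _ => 0 end) | 6%N => mx (fun i j => match i, j with 0%N, 0%N => (y6) | 1%N, 0%N => ((-(1/3))*y5 + (2/3)*y1) | 1%N, 1%N => ((-1)*y6) | 1%N, 2%N => ((-5)*y7) | 2%N, 0%N => ((1/4)*y4) | 2%N, 2%N => ((1/2)*y6) | 3%N, 3%N => ((-(1/2))*y6) | 3%N, 4%N => ((-5)*y7) | _, _ => 0 end) | 7%N => mx (fun _ _ => 0) | _ => 0 end.
Definition Qm (a : nat) (y0 y1 y2 y3 y4 y5 y6 y7 : C) : 'M[C]_5 := match a with 0%N => mx (fun i j => match i, j with 0%N, 0%N => ((-(1/3))*y0) | 1%N, 0%N => ((-(4/3))*y2*y2) | 1%N, 1%N => ((1/2)*y0) | 2%N, 0%N => ((25/6)*y2*y7*y7 + (-(3/2))*y1*y2 + (-(5/3))*y0*y7) | 2%N, 1%N => ((20/9)*y5*y7 + (1/3)*y3 + (-(2/3))*y2*y6 + (-(40/9))*y1*y7) | 2%N, 2%N => ((-(1/3))*y0) | 3%N, 1%N => ((-(25/3))*y2*y7*y7 + 3*y1*y2 + (-(5/3))*y0*y7) | 3%N, 2%N => ((-(2/3))*y2*y2) | 3%N, 3%N => ((1/2)*y0) | 4%N, 0%N => ((250/3)*y2*y7*y7*y7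 + (-(100/9))*y2*y5*y7 + (-(5/3))*y2*y3 + (20/3)*y2*y2*y6 + (-(70/9))*y1*y2*y7 + (-(25/3))*y0*y7*y7 + (4/3)*y0*y5 + (-1)*y0*y1) | 4%N, 1%N => ((625/3)*y7*y7*y7*y7 + (-(250/9))*y5*y7*y7 + (-(10/3))*y3*y7 + (40/3)*y2*y6*y7 + (2/3)*y2*y4 + (-(250/9))*y1*y7*y7 + 2*y1*y5 + (-1)*y1*y1 + (2/3)*y0*y6) | 4%N, 2%N => ((25/6)*y2*y7*y7 + (-(3/2))*y1*y2 + (-(5/3))*y0*y7) | 4%N, 3%N => ((40/9)*y5*y7 + (2/3)*y3 + (-(4/3))*y2*y6 + (-(80/9))*y1*y7) | 4%N, 4%N => ((-(1/3))*y0) | _, _ => 0 end) | 1%N => mx (fun i j => match i, j with 1%N, 0%N => ((-(4/9))*y2*y5 + (8/9)*y1*y2 + (20/3)*y0*y7) | 2%N, 0%N => ((-(5/6))*y2*y4 + (5/6)*y0*y6) | 2%N, 1%N => ((2/9)*y5*y6 + (-(10/3))*y4*y7 + (-(4/9))*y1*y6) | 3%N, 0%N => ((-(250/3))*y2*y7*y7*y7 + (100/9)*y2*y5*y7 + (5/3)*y2*y3 + (-(20/3))*y2*y2*y6 + (70/9)*y1*y2*y7 + (25/3)*y0*y7*y7 + (-(4/3))*y0*y5 + y0*y1) | 3%N, 1%N => ((5/3)*y2*y4 + (-(5/3))*y0*y6) | 3%N, 2%N => ((-(2/9))*y2*y5 + (4/9)*y1*y2 + (10/3)*y0*y7) | 4%N,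 1%N => ((250/3)*y6*y7*y7*y7 + (-(100/9))*y5*y6*y7 + (-(25/3))*y4*y7*y7 + (4/3)*y4*y5 + (-(5/3))*y3*y6 + (20/3)*y2*y6*y6 + (-(70/9))*y1*y6*y7 + (-1)*y1*y4) | 4%N, 2%N => ((-(5/6))*y2*y4 + (5/6)*y0*y6) | 4%N, 3%N => ((4/9)*y5*y6 + (-(20/3))*y4*y7 + (-(8/9))*y1*y6) | _, _ => 0 end) | 2%N => mx (fun i j => match i, j with 1%N, 0%N => ((-(10/3))*y2*y7 + (-(2/3))*y0) | 2%N, 1%N => ((5/3)*y6*y7 + (1/3)*y4) | 3%N, 0%N => ((25/3)*y2*y7*y7 + (-3)*y1*y2 + (5/3)*y0*y7) | 3%N, 2%N => ((-(5/3))*y2*y7 + (-(1/3))*y0) | 4%N, 0%N => ((-(5/3))*y2*y4 + (5/3)*y0*y6) | 4%N, 1%N => ((-(25/3))*y6*y7*y7 + (-(5/3))*y4*y7 + 3*y1*y6) | 4%N, 3%N => ((10/3)*y6*y7 + (2/3)*y4) | _, _ => 0 end) | 3%N => mx (fun i j => match i, j with 0%N, 0%N => ((1/3)*y4) | 1%N, 0%N => ((-(40/9))*y5*y7 + (-(2/3))*y3 + (4/3)*y2*y6 + (80/9)*y1*y7) | 1%N, 1%N => ((-(1/2))*y4) | 2%N, 0%N => ((-(25/6))*y6*y7*y7 + (5/3)*y4*y7 + (3/2)*y1*y6) | 2%N, 1%N => ((2/3)*y6*y6) | 2%N, 2%N => ((1/3)*y4) | 3%N, 0%N => ((-(625/3))*y7*y7*y7*y7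 + (250/9)*y5*y7*y7 + (10/3)*y3*y7 + (-(40/3))*y2*y6*y7 + (-(2/3))*y2*y4 + (250/9)*y1*y7*y7 + (-2)*y1*y5 + y1*y1 + (-(2/3))*y0*y6) | 3%N, 1%N => ((25/3)*y6*y7*y7 + (5/3)*y4*y7 + (-3)*y1*y6) | 3%N, 2%N => ((-(20/9))*y5*y7 + (-(1/3))*y3 + (2/3)*y2*y6 + (40/9)*y1*y7) | 3%N, 3%N => ((-(1/2))*y4) | 4%N, 0%N => ((-(250/3))*y6*y7*y7*y7 + (100/9)*y5*y6*y7 + (25/3)*y4*y7*y7 + (-(4/3))*y4*y5 + (5/3)*y3*y6 + (-(20/3))*y2*y6*y6 + (70/9)*y1*y6*y7 + y1*y4) | 4%N, 2%N => ((-(25/6))*y6*y7*y7 + (5/3)*y4*y7 + (3/2)*y1*y6) | 4%N, 3%N => ((4/3)*y6*y6) | 4%N, 4%N => ((1/3)*y4) | _, _ => 0 end) | 4%N => mx (fun i j => match i, j with 0%N, 0%N => ((-1)*y2) | 1%N, 1%N => ((3/2)*y2) | 2%N, 0%N => ((-10)*y2*y7 + (-(1/2))*y0) | 2%N, 1%N => ((-25)*y7*y7 + (2/3)*y5 + (-(1/3))*y1) | 2%N, 2%N => ((-1)*y2) | 3%N, 0%N => (2*y2*y2) | 3%N, 1%N => (5*y2*y7 + y0) | 3%N, 3%N => ((3/2)*y2) | 4%N, 0%N => ((2/3)*y2*y5 + (-(4/3))*y1*y2 + (-10)*y0*y7) | 4%N, 1%N => ((20/3)*y5*y7 + y3 +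 (-2)*y2*y6 + (-(40/3))*y1*y7) | 4%N, 2%N => ((-10)*y2*y7 + (-(1/2))*y0) | 4%N, 3%N => ((-50)*y7*y7 + (4/3)*y5 + (-(2/3))*y1) | 4%N, 4%N => ((-1)*y2) | _, _ => 0 end) | 5%N => mx (fun i j => match i, j with 1%N, 0%N => ((40/3)*y2*y7 + (2/3)*y0) | 2%N, 1%N => ((-(20/3))*y6*y7 + (-(1/3))*y4) | 3%N, 0%N => ((-(25/3))*y2*y7*y7 + 3*y1*y2 + (10/3)*y0*y7) | 3%N, 2%N => ((20/3)*y2*y7 + (1/3)*y0) | 4%N, 0%N => ((5/3)*y2*y4 + (-(5/3))*y0*y6) | 4%N, 1%N => ((25/3)*y6*y7*y7 + (-(10/3))*y4*y7 + (-3)*y1*y6) | 4%N, 3%N => ((-(40/3))*y6*y7 + (-(2/3))*y4) | _, _ => 0 end) | 6%N => mx (fun i j => match i, j with 0%N, 0%N => (y6) | 1%N, 0%N => (50*y7*y7 + (-(4/3))*y5 + (2/3)*y1) | 1%N, 1%N => ((-(3/2))*y6) | 2%N, 0%N => (10*y6*y7 + (1/2)*y4) | 2%N, 2%N => (y6) | 3%N, 0%N => ((-(20/3))*y5*y7 + (-1)*y3 + 2*y2*y6 + (40/3)*y1*y7) | 3%N, 1%N => ((-5)*y6*y7 + (-1)*y4) | 3%N, 2%N => (25*y7*y7 + (-(2/3))*y5 + (1/3)*y1) | 3%N, 3%N => ((-(3/2))*y6) | 4%N, 0%N => ((-(2/3))*y5*y6 + 10*y4*y7 + (4/3)*y1*y6)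 | 4%N, 1%N => ((-2)*y6*y6) | 4%N, 2%N => (10*y6*y7 + (1/2)*y4) | 4%N, 4%N => (y6) | _, _ => 0 end) | 7%N => mx (fun i j => match i, j with 1%N, 0%N => ((-10)*y2) | 2%N, 1%N => (5*y6) | 3%N, 0%N => ((-5)*y0) | 3%N, 2%N => ((-5)*y2) | 4%N, 1%N => (5*y4) | 4%N, 3%N => (10*y6) | _, _ => 0 end) | _ => 0 end.
Lemma Vm_tr (a : nat) (y0 y1 y2 y3 y4 y5 y6 y7 : C) : (a < 8)%N -> in_sl5 (Vm a y0 y1 y2 y3 y4 y5 y6 y7).
Proof.
rewrite /in_sl5.
do 8 (case: a => [|a]; first by move=> _; rewrite /Vm tr_mx /=; field).
by [].
Qed.
Lemma Qm_f0 (a : nat) (y0 y1 y2 y3 y4 y5 y6 y7 : C) : (a < 8)%N -> lie (Qm a y0 y1 y2 y3 y4 y5 y6 y7) f0m = 0.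
Proof.
do 8 (case: a => [|a]; first by move=> _; rewrite /Qm /f0m lie_mx zero_mx; apply: mx_ext; ent; rewrite /mul5 /=; field).
by [].
Qed.
Lemma Qm_eq0 (y0 y1 y2 y3 y4 y5 y6 y7 : C) : lie (xmat y0 y1 y2 y3 y4 y5 y6 y7) (Bg 0 + lie f0m (Vm 0 y0 y1 y2 y3 y4 y5 y6 y7)) = Qm 0 y0 y1 y2 y3 y4 y5 y6 y7.
Proof. by rewrite /xmat /Bg /f0m /Vm /Qm !lie_mx add_mx lie_mx; apply: mx_ext; ent; rewrite /mul5 /=; field. Qed.
Lemma Qm_eq1 (y0 y1 y2 y3 y4 y5 y6 y7 : C) : lie (xmat y0 y1 y2 y3 y4 y5 y6 y7) (Bg 1 + lie f0m (Vm 1 y0 y1 y2 y3 y4 y5 y6 y7)) = Qm 1 y0 y1 y2 y3 y4 y5 y6 y7.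
Proof. by rewrite /xmat /Bg /f0m /Vm /Qm !lie_mx add_mx lie_mx; apply: mx_ext; ent; rewrite /mul5 /=; field. Qed.
Lemma Qm_eq2 (y0 y1 y2 y3 y4 y5 y6 y7 : C) : lie (xmat y0 y1 y2 y3 y4 y5 y6 y7) (Bg 2 + lie f0m (Vm 2 y0 y1 y2 y3 y4 y5 y6 y7)) = Qm 2 y0 y1 y2 y3 y4 y5 y6 y7.
Proof. by rewrite /xmat /Bg /f0m /Vm /Qm !lie_mx add_mx lie_mx; apply: mx_ext; ent; rewrite /mul5 /=; field. Qed.
Lemma Qm_eq3 (y0 y1 y2 y3 y4 y5 y6 y7 : C) : lie (xmat y0 y1 y2 y3 y4 y5 y6 y7) (Bg 3 + lie f0m (Vm 3 y0 y1 y2 y3 y4 y5 y6 y7)) = Qm 3 y0 y1 y2 y3 y4 y5 y6 y7.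
Proof. by rewrite /xmat /Bg /f0m /Vm /Qm !lie_mx add_mx lie_mx; apply: mx_ext; ent; rewrite /mul5 /=; field. Qed.
Lemma Qm_eq4 (y0 y1 y2 y3 y4 y5 y6 y7 : C) : lie (xmat y0 y1 y2 y3 y4 y5 y6 y7) (Bg 4 + lie f0m (Vm 4 y0 y1 y2 y3 y4 y5 y6 y7)) = Qm 4 y0 y1 y2 y3 y4 y5 y6 y7.
Proof. by rewrite /xmat /Bg /f0m /Vm /Qm !lie_mx add_mx lie_mx; apply: mx_ext; ent; rewrite /mul5 /=; field. Qed.
Lemma Qm_eq5 (y0 y1 y2 y3 y4 y5 y6 y7 : C) : lie (xmat y0 y1 y2 y3 y4 y5 y6 y7) (Bg 5 + lie f0m (Vm 5 y0 y1 y2 y3 y4 y5 y6 y7)) = Qm 5 y0 y1 y2 y3 y4 y5 y6 y7.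
Proof. by rewrite /xmat /Bg /f0m /Vm /Qm !lie_mx add_mx lie_mx; apply: mx_ext; ent; rewrite /mul5 /=; field. Qed.
Lemma Qm_eq6 (y0 y1 y2 y3 y4 y5 y6 y7 : C) : lie (xmat y0 y1 y2 y3 y4 y5 y6 y7) (Bg 6 + lie f0m (Vm 6 y0 y1 y2 y3 y4 y5 y6 y7)) = Qm 6 y0 y1 y2 y3 y4 y5 y6 y7.
Proof. by rewrite /xmat /Bg /f0m /Vm /Qm !lie_mx add_mx lie_mx; apply: mx_ext; ent; rewrite /mul5 /=; field. Qed.
Lemma Qm_eq7 (y0 y1 y2 y3 y4 y5 y6 y7 : C) : lie (xmat y0 y1 y2 y3 y4 y5 y6 y7) (Bg 7 + lie f0m (Vm 7 y0 y1 y2 y3 y4 y5 y6 y7)) = Qm 7 y0 y1 y2 y3 y4 y5 y6 y7.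
Proof. by rewrite /xmat /Bg /f0m /Vm /Qm !lie_mx add_mx lie_mx; apply: mx_ext; ent; rewrite /mul5 /=; field. Qed.
Lemma Qm_eq (a : nat) (y0 y1 y2 y3 y4 y5 y6 y7 : C) : (a < 8)%N -> lie (xmat y0 y1 y2 y3 y4 y5 y6 y7) (Bg a + lie f0m (Vm a y0 y1 y2 y3 y4 y5 y6 y7)) = Qm a y0 y1 y2 y3 y4 y5 y6 y7.
Proof.
case: a => [|a]; first by move=> _; exact: Qm_eq0.
case: a => [|a]; first by move=> _; exact: Qm_eq1.
case: a => [|a]; first by move=> _; exact: Qm_eq2.
case: a => [|a]; first by move=> _; exact: Qm_eq3.
case: a => [|a]; first by move=> _; exact: Qm_eq4.
case: a => [|a]; first by move=> _; exact: Qm_eq5.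
case: a => [|a]; first by move=> _; exact: Qm_eq6.
case: a => [|a]; first by move=> _; exact: Qm_eq7.
by [].
Qed.
End Expl4.

Section Reif.
Variable C : numClosedFieldType.

Inductive pe := PC of C | PV of nat | PA of pe & pe | PM of pe & pe.

Fixpoint interp (R : comNzRingType) (k : C -> R) (v : nat -> R) (e : pe) : R :=
  match e with
  | PC c => k c
  | PV i => v i
  | PA a b => interp k v a + interp k v b
  | PM a b => interp k v a * interp k v b
  end.

Fixpoint pdeg (e : pe) : nat :=
  match e with
  | PC _ => 0
  | PV _ => 1
  | PA a b => maxn (pdeg a) (pdeg b)
  | PM a b => pdeg a + pdeg b
  end.

Lemma interp_meval (n : nat) (q : 'I_n -> C) (v : nat -> {mpoly C[n]}) e :
  (interp (fun c => c%:MP) v e).@[q] = interp id (fun i => (v i).@[q]) e.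
Proof.
elim: e => [c|i|a iha b ihb|a iha b ihb] /=.
- by rewrite mevalC.
- by [].
- by rewrite mevalD iha ihb.
- by rewrite mevalM iha ihb.
Qed.

Lemma msize_leP (n : nat) (p : {mpoly C[n]}) d :
  (forall m, m \in msupp p -> (mdeg m < d)%N) -> (msize p <= d)%N.
Proof.
move=> h; rewrite msizeE; apply/bigmax_leqP_seq => m mp _; exact: h.
Qed.

Lemma msizeM_le2 (n : nat) (p q : {mpoly C[n]}) :
  (msize (p * q) <= (msize p + msize q).-1)%N.
Proof.
apply: msize_leP => m /msuppM_le /allpairsP [[m1 m2] /= [h1 h2 ->]].
have := msize_mdeg_lt h1; have := msize_mdeg_lt h2; rewrite mdegD; lia.
Qed.

Lemma interp_msize (n : nat) (v : nat -> {mpoly C[n]}) e :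
  (forall i, msize (v i) <= 2)%N -> (msize (interp (fun c => c%:MP) v e) <= (pdeg e).+1)%N.
Proof.
move=> hv; elim: e => [c|i|a iha b ihb|a iha b ihb] /=.
- by rewrite msizeC; case: (c != 0).
- exact: hv.
- apply: leq_trans (msizeD_le _ _) _; rewrite geq_max; apply/andP; split.
  + by apply: leq_trans iha _; rewrite ltnS leq_maxl.
  + by apply: leq_trans ihb _; rewrite ltnS leq_maxr.
- apply: leq_trans (msizeM_le2 _ _) _.
  have aux : forall x y a b : nat, (x <= a.+1)%N -> (y <= b.+1)%N -> ((x + y).-1 <= (a + b).+1)%N.
    by move=> x y a' b'; lia.
  exact: aux.
Qed.

End Reif.

Section Reif2.
Variable C : numClosedFieldType.

Lemma interp_ext (R : comNzRingType) (k : C -> R) (v1 v2 : nat -> R) e :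
  (forall i, v1 i = v2 i) -> interp k v1 e = interp k v2 e.
Proof. by move=> h; elim: e => //= [a -> b ->|a -> b ->]. Qed.

Lemma restrict (n : nat) (p : {mpoly C[n]}) (w : 'I_n -> C) :
  exists r : {poly C}, (size r <= msize p)%N /\ forall t, p.@[fun s => t * w s] = r.[t].
Proof.
exists (\sum_(m <- msupp p) (p@_m * \prod_i w i ^+ m i) *: 'X^(mdeg m)); split.
  apply: leq_trans (size_sum _ _ _) _; apply/bigmax_leqP_seq => m mp _.
  apply: leq_trans (size_scale_leq _ _) _; rewrite size_polyXn.
  exact: msize_mdeg_lt.
move=> t; rewrite mevalE horner_sum; apply: eq_bigr => m _.
rewrite hornerZ hornerXn -mulrA; congr (_ * _).
rewrite (eq_bigr (fun i => t ^+ m i * w i ^+ m i)); last by move=> i _; rewrite exprMn.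
by rewrite big_split /= prodrXr mdegE mulrC.
Qed.

Lemma poly_ext_all (r s : {poly C}) : (forall t, r.[t] = s.[t]) -> r = s.
Proof.
move=> h; apply/eqP; rewrite -subr_eq0; apply/negPn/negP => nz.
set d := r - s.
have A : all (root d) [seq i%:R | i <- iota 0 (size d)].
  by apply/allP => x /mapP [i _ ->]; rewrite /root /d hornerD hornerN h subrr.
have U : uniq [seq (i%:R : C) | i <- iota 0 (size d)].
  by rewrite map_inj_uniq ?iota_uniq // => a b /eqP; rewrite eqr_nat => /eqP.
by move: (max_poly_roots nz A U); rewrite size_map size_iota ltnn.
Qed.

End Reif2.

Section Expl5.
Variable C : numClosedFieldType.
Local Notation mx := (@mx C).
Local Notation Bg := (@Bg C).
Local Notation Qm := (@Qm C).
Local Notation PC := (@PC C).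
Local Notation PV := (@PV C).
Local Notation PA := (@PA C).
Local Notation PM := (@PM C).
Definition lamexpr (a b : nat) : pe C := match a, b with 0%N, 0%N => PC 0 | 0%N, 1%N => PA (PA (PA (PA (PA (PA (PA (PM (PM (PM (PM (PC (2500/3)) (PV 2)) (PV 7)) (PV 7)) (PV 7)) (PM (PM (PM (PC (-(1000/9))) (PV 2)) (PV 5)) (PV 7))) (PM (PM (PC (-(50/3))) (PV 2)) (PV 3))) (PM (PM (PM (PC (200/3)) (PV 2)) (PV 2)) (PV 6))) (PM (PM (PM (PC (-(700/9))) (PV 1)) (PV 2)) (PV 7))) (PM (PM (PM (PC (-(250/3))) (PV 0)) (PV 7)) (PV 7))) (PM (PM (PC (40/3)) (PV 0)) (PV 5))) (PM (PM (PC (-10)) (PV 0)) (PV 1)) | 0%N, 2%N => PA (PA (PM (PM (PM (PC (-(250/3))) (PV 2)) (PV 7)) (PV 7)) (PM (PM (PC 30) (PV 1)) (PV 2))) (PM (PM (PC (-(50/3))) (PV 0)) (PV 7)) | 0%N, 3%N => PA (PA (PA (PA (PA (PA (PA (PA (PM (PM (PM (PM (PC (6250/3)) (PV 7)) (PV 7)) (PV 7)) (PV 7)) (PM (PM (PM (PC (-(2500/9))) (PV 5)) (PV 7)) (PV 7))) (PM (PM (PC (-(100/3))) (PV 3)) (PV 7))) (PM (PM (PM (PC (400/3)) (PV 2)) (PV 6)) (PV 7))) (PM (PM (PC (20/3)) (PV 2)) (PV 4))) (PM (PM (PM (PC (-(2500/9))) (PV 1)) (PV 7)) (PV 7))) (PM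 (PM (PC 20) (PV 1)) (PV 5))) (PM (PM (PC (-10)) (PV 1)) (PV 1))) (PM (PM (PC (20/3)) (PV 0)) (PV 6)) | 0%N, 4%N => PM (PM (PC (-20)) (PV 2)) (PV 2) | 0%N, 5%N => PA (PA (PM (PM (PM (PC (250/3)) (PV 2)) (PV 7)) (PV 7)) (PM (PM (PC (-30)) (PV 1)) (PV 2))) (PM (PM (PC (-(100/3))) (PV 0)) (PV 7)) | 0%N, 6%N => PA (PA (PA (PM (PM (PC (200/3)) (PV 5)) (PV 7)) (PM (PC 10) (PV 3))) (PM (PM (PC (-20)) (PV 2)) (PV 6))) (PM (PM (PC (-(400/3))) (PV 1)) (PV 7)) | 0%N, 7%N => PM (PC 50) (PV 0) | 1%N, 0%N => PA (PA (PA (PA (PA (PA (PA (PM (PM (PM (PM (PC (-(2500/3))) (PV 2)) (PV 7)) (PV 7)) (PV 7)) (PM (PM (PM (PC (1000/9)) (PV 2)) (PV 5)) (PV 7))) (PM (PM (PC (50/3)) (PV 2)) (PV 3))) (PM (PM (PM (PC (-(200/3))) (PV 2)) (PV 2)) (PV 6))) (PM (PM (PM (PC (700/9)) (PV 1)) (PV 2)) (PV 7))) (PM (PM (PM (PC (250/3)) (PV 0)) (PV 7)) (PV 7))) (PM (PM (PC (-(40/3))) (PV 0)) (PV 5))) (PM (PM (PC 10) (PV 0)) (PV 1)) | 1%N, 1%N => PC 0 | 1%N, 2%N => PA (PM (PM (PC (50/3)) (PV 2)) (PV 4)) (PM (PM (PC (-(50/3))) (PV 0)) (PV 6)) | 1%N,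 3%N => PA (PA (PA (PA (PA (PA (PA (PM (PM (PM (PM (PC (2500/3)) (PV 6)) (PV 7)) (PV 7)) (PV 7)) (PM (PM (PM (PC (-(1000/9))) (PV 5)) (PV 6)) (PV 7))) (PM (PM (PM (PC (-(250/3))) (PV 4)) (PV 7)) (PV 7))) (PM (PM (PC (40/3)) (PV 4)) (PV 5))) (PM (PM (PC (-(50/3))) (PV 3)) (PV 6))) (PM (PM (PM (PC (200/3)) (PV 2)) (PV 6)) (PV 6))) (PM (PM (PM (PC (-(700/9))) (PV 1)) (PV 6)) (PV 7))) (PM (PM (PC (-10)) (PV 1)) (PV 4)) | 1%N, 4%N => PA (PA (PM (PM (PC (-(20/3))) (PV 2)) (PV 5)) (PM (PM (PC (40/3)) (PV 1)) (PV 2))) (PM (PM (PC 100) (PV 0)) (PV 7)) | 1%N, 5%N => PA (PM (PM (PC (-(50/3))) (PV 2)) (PV 4)) (PM (PM (PC (50/3)) (PV 0)) (PV 6)) | 1%N, 6%N => PA (PA (PM (PM (PC (20/3)) (PV 5)) (PV 6)) (PM (PM (PC (-100)) (PV 4)) (PV 7))) (PM (PM (PC (-(40/3))) (PV 1)) (PV 6)) | 1%N, 7%N => PC 0 | 2%N, 0%N => PA (PA (PM (PM (PM (PC (250/3)) (PV 2)) (PV 7)) (PV 7)) (PM (PM (PC (-30)) (PV 1)) (PV 2))) (PM (PM (PC (50/3)) (PV 0)) (PV 7)) | 2%N, 1%N => PA (PM (PM (PC (-(50/3))) (PV 2)) (PV 4)) (PM (PM (PC (50/3)) (PV 0)) (PV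 6)) | 2%N, 2%N => PC 0 | 2%N, 3%N => PA (PA (PM (PM (PM (PC (-(250/3))) (PV 6)) (PV 7)) (PV 7)) (PM (PM (PC (-(50/3))) (PV 4)) (PV 7))) (PM (PM (PC 30) (PV 1)) (PV 6)) | 2%N, 4%N => PA (PM (PM (PC (-50)) (PV 2)) (PV 7)) (PM (PC (-10)) (PV 0)) | 2%N, 5%N => PC 0 | 2%N, 6%N => PA (PM (PM (PC 50) (PV 6)) (PV 7)) (PM (PC 10) (PV 4)) | 2%N, 7%N => PC 0 | 3%N, 0%N => PA (PA (PA (PA (PA (PA (PA (PA (PM (PM (PM (PM (PC (-(6250/3))) (PV 7)) (PV 7)) (PV 7)) (PV 7)) (PM (PM (PM (PC (2500/9)) (PV 5)) (PV 7)) (PV 7))) (PM (PM (PC (100/3)) (PV 3)) (PV 7))) (PM (PM (PM (PC (-(400/3))) (PV 2)) (PV 6)) (PV 7))) (PM (PM (PC (-(20/3))) (PV 2)) (PV 4))) (PM (PM (PM (PC (2500/9)) (PV 1)) (PV 7)) (PV 7))) (PM (PM (PC (-20)) (PV 1)) (PV 5))) (PM (PM (PC 10) (PV 1)) (PV 1))) (PM (PM (PC (-(20/3))) (PV 0)) (PV 6)) | 3%N, 1%N => PA (PA (PA (PA (PA (PA (PA (PM (PM (PM (PM (PC (-(2500/3))) (PV 6)) (PV 7)) (PV 7)) (PV 7)) (PM (PM (PM (PC (1000/9)) (PV 5)) (PV 6)) (PV 7))) (PM (PM (PM (PC (250/3)) (PV 4)) (PV 7)) (PV 7))) (PM (PM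 (PC (-(40/3))) (PV 4)) (PV 5))) (PM (PM (PC (50/3)) (PV 3)) (PV 6))) (PM (PM (PM (PC (-(200/3))) (PV 2)) (PV 6)) (PV 6))) (PM (PM (PM (PC (700/9)) (PV 1)) (PV 6)) (PV 7))) (PM (PM (PC 10) (PV 1)) (PV 4)) | 3%N, 2%N => PA (PA (PM (PM (PM (PC (250/3)) (PV 6)) (PV 7)) (PV 7)) (PM (PM (PC (50/3)) (PV 4)) (PV 7))) (PM (PM (PC (-30)) (PV 1)) (PV 6)) | 3%N, 3%N => PC 0 | 3%N, 4%N => PA (PA (PA (PM (PM (PC (-(200/3))) (PV 5)) (PV 7)) (PM (PC (-10)) (PV 3))) (PM (PM (PC 20) (PV 2)) (PV 6))) (PM (PM (PC (400/3)) (PV 1)) (PV 7)) | 3%N, 5%N => PA (PA (PM (PM (PM (PC (-(250/3))) (PV 6)) (PV 7)) (PV 7)) (PM (PM (PC (100/3)) (PV 4)) (PV 7))) (PM (PM (PC 30) (PV 1)) (PV 6)) | 3%N, 6%N => PM (PM (PC 20) (PV 6)) (PV 6) | 3%N, 7%N => PM (PC (-50)) (PV 4) | 4%N, 0%N => PM (PM (PC 20) (PV 2)) (PV 2) | 4%N, 1%N => PA (PA (PM (PM (PC (20/3)) (PV 2)) (PV 5)) (PM (PM (PC (-(40/3))) (PV 1)) (PV 2))) (PM (PM (PC (-100)) (PV 0)) (PV 7)) | 4%N, 2%N => PA (PM (PM (PC 50) (PV 2)) (PV 7)) (PM (PC 10) (PV 0)) | 4%N, 3%N => PA (PA (PA (PM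 (PM (PC (200/3)) (PV 5)) (PV 7)) (PM (PC 10) (PV 3))) (PM (PM (PC (-20)) (PV 2)) (PV 6))) (PM (PM (PC (-(400/3))) (PV 1)) (PV 7)) | 4%N, 4%N => PC 0 | 4%N, 5%N => PA (PM (PM (PC (-200)) (PV 2)) (PV 7)) (PM (PC (-10)) (PV 0)) | 4%N, 6%N => PA (PA (PM (PM (PC (-750)) (PV 7)) (PV 7)) (PM (PC 20) (PV 5))) (PM (PC (-10)) (PV 1)) | 4%N, 7%N => PM (PC 150) (PV 2) | 5%N, 0%N => PA (PA (PM (PM (PM (PC (-(250/3))) (PV 2)) (PV 7)) (PV 7)) (PM (PM (PC 30) (PV 1)) (PV 2))) (PM (PM (PC (100/3)) (PV 0)) (PV 7)) | 5%N, 1%N => PA (PM (PM (PC (50/3)) (PV 2)) (PV 4)) (PM (PM (PC (-(50/3))) (PV 0)) (PV 6)) | 5%N, 2%N => PC 0 | 5%N, 3%N => PA (PA (PM (PM (PM (PC (250/3)) (PV 6)) (PV 7)) (PV 7)) (PM (PM (PC (-(100/3))) (PV 4)) (PV 7))) (PM (PM (PC (-30)) (PV 1)) (PV 6)) | 5%N, 4%N => PA (PM (PM (PC 200) (PV 2)) (PV 7)) (PM (PC 10) (PV 0)) | 5%N, 5%N => PC 0 | 5%N, 6%N => PA (PM (PM (PC (-200)) (PV 6)) (PV 7)) (PM (PC (-10)) (PV 4)) | 5%N, 7%N => PC 0 | 6%N, 0%N => PA (PA (PA (PM (PM (PC (-(200/3))) (PV 5)) (PV 7)) (PM (PC (-10))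 (PV 3))) (PM (PM (PC 20) (PV 2)) (PV 6))) (PM (PM (PC (400/3)) (PV 1)) (PV 7)) | 6%N, 1%N => PA (PA (PM (PM (PC (-(20/3))) (PV 5)) (PV 6)) (PM (PM (PC 100) (PV 4)) (PV 7))) (PM (PM (PC (40/3)) (PV 1)) (PV 6)) | 6%N, 2%N => PA (PM (PM (PC (-50)) (PV 6)) (PV 7)) (PM (PC (-10)) (PV 4)) | 6%N, 3%N => PM (PM (PC (-20)) (PV 6)) (PV 6) | 6%N, 4%N => PA (PA (PM (PM (PC 750) (PV 7)) (PV 7)) (PM (PC (-20)) (PV 5))) (PM (PC 10) (PV 1)) | 6%N, 5%N => PA (PM (PM (PC 200) (PV 6)) (PV 7)) (PM (PC 10) (PV 4)) | 6%N, 6%N => PC 0 | 6%N, 7%N => PM (PC (-150)) (PV 6) | 7%N, 0%N => PM (PC (-50)) (PV 0) | 7%N, 1%N => PC 0 | 7%N, 2%N => PC 0 | 7%N, 3%N => PM (PC 50) (PV 4) | 7%N, 4%N => PM (PC (-150)) (PV 2) | 7%N, 5%N => PC 0 | 7%N, 6%N => PM (PC 150) (PV 6) | 7%N, 7%N => PC 0 | _, _ => PC 0 end.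
Lemma lamexpr_deg (a b : nat) : (pdeg (lamexpr a b) <= 4)%N.
Proof. by do 9 (case: a => [|a]; first by do 9 (case: b => [|b] //)). Qed.
Definition yf (y0 y1 y2 y3 y4 y5 y6 y7 : C) (i : nat) : C := match i with 0%N => y0 | 1%N => y1 | 2%N => y2 | 3%N => y3 | 4%N => y4 | 5%N => y5 | 6%N => y6 | 7%N => y7 | _ => 0 end.
Lemma lam_eval (a b : nat) (y0 y1 y2 y3 y4 y5 y6 y7 : C) : (a < 8)%N -> (b < 8)%N ->
  interp id (yf y0 y1 y2 y3 y4 y5 y6 y7) (lamexpr a b) = killing (Qm a y0 y1 y2 y3 y4 y5 y6 y7) (Bg b).
Proof.
rewrite /killing.
do 8 (case: a => [|a]; [do 8 (case: b => [|b]; first by move=> _ _; rewrite /Qm /Bg mul_mx tr_mx /mul5 /=; field); by [] | ]).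
by [].
Qed.
Definition LT (a b : nat) : C := match a, b with 0%N, 3%N => (6250/3) | 3%N, 0%N => (-(6250/3)) | _, _ => 0 end.
Definition LS (a b : nat) : C := match a, b with 4%N, 6%N => (-750) | 6%N, 4%N => 750 | _, _ => 0 end.
Lemma lam_line (a b : nat) (t : C) : (a < 8)%N -> (b < 8)%N ->
  interp id (fun i => if i == 7%N then t else 0) (lamexpr a b) = LT a b * t ^+ 4 + LS a b * t ^+ 2.
Proof.
do 8 (case: a => [|a]; [do 8 (case: b => [|b]; first by move=> _ _; rewrite /= /LT /LS /=; field); by [] | ]).
by [].
Qed.
End Expl5.

Section Abs.
Variable C : numClosedFieldType.
Local Notation em := (@em C).
Local Notation f0m := (@f0m C).
Local Notation Bg := (@Bg C).
Local Notation Gb := (@Gb C).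

Lemma span_ge (Y : 'M[C]_5) : in_sl5 Y -> lie Y em = 0 -> Y = \sum_(k < 8) gec Y k *: Bg k.
Proof.
have := @span_ge_explicit C (Y (inord 0) (inord 0)) (Y (inord 0) (inord 1)) (Y (inord 0) (inord 2)) (Y (inord 0) (inord 3)) (Y (inord 0) (inord 4)) (Y (inord 1) (inord 0)) (Y (inord 1) (inord 1)) (Y (inord 1) (inord 2)) (Y (inord 1) (inord 3)) (Y (inord 1) (inord 4)) (Y (inord 2) (inord 0)) (Y (inord 2) (inord 1)) (Y (inord 2) (inord 2)) (Y (inord 2) (inord 3)) (Y (inord 2) (inord 4)) (Y (inord 3) (inord 0)) (Y (inord 3) (inord 1)) (Y (inord 3) (inord 2)) (Y (inord 3) (inord 3)) (Y (inord 3) (inord 4)) (Y (inord 4) (inord 0)) (Y (inord 4) (inord 1)) (Y (inord 4) (inord 2)) (Y (inord 4) (inord 3)) (Y (inord 4) (inord 4)).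
by rewrite -!vmxK.
Qed.

Lemma span_gf (Y : 'M[C]_5) : in_sl5 Y -> lie f0m Y = 0 -> Y = \sum_(k < 8) gfc Y k *: Gb k.
Proof.
have := @span_gf_explicit C (Y (inord 0) (inord 0)) (Y (inord 0) (inord 1)) (Y (inord 0) (inord 2)) (Y (inord 0) (inord 3)) (Y (inord 0) (inord 4)) (Y (inord 1) (inord 0)) (Y (inord 1) (inord 1)) (Y (inord 1) (inord 2)) (Y (inord 1) (inord 3)) (Y (inord 1) (inord 4)) (Y (inord 2) (inord 0)) (Y (inord 2) (inord 1)) (Y (inord 2) (inord 2)) (Y (inord 2) (inord 3)) (Y (inord 2) (inord 4)) (Y (inord 3) (inord 0)) (Y (inord 3) (inord 1)) (Y (inord 3) (inord 2)) (Y (inord 3) (inord 3)) (Y (inord 3) (inord 4)) (Y (inord 4) (inord 0)) (Y (inord 4) (inord 1)) (Y (inord 4) (inord 2)) (Y (inord 4) (inord 3)) (Y (inord 4) (inord 4)).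
by rewrite -!vmxK.
Qed.

Lemma img_form (W : 'M[C]_5) : let U := lie f0m W in
  U = Umat (U (inord 1) (inord 0)) (U (inord 2) (inord 0)) (U (inord 2) (inord 1)) (U (inord 3) (inord 0)) (U (inord 3) (inord 1)) (U (inord 3) (inord 2)) (U (inord 4) (inord 0)) (U (inord 4) (inord 1)) (U (inord 4) (inord 2)) (U (inord 4) (inord 3)) (U (inord 0) (inord 1)) (U (inord 0) (inord 2)) (U (inord 3) (inord 4)) (U (inord 0) (inord 0)) (U (inord 1) (inord 1)) (U (inord 2) (inord 2)).
Proof.
have := @img_form_explicit C (W (inord 0) (inord 0)) (W (inord 0) (inord 1)) (W (inord 0) (inord 2)) (W (inord 0) (inord 3)) (W (inord 0) (inord 4)) (W (inord 1) (inord 0)) (W (inord 1) (inord 1)) (W (inord 1) (inord 2)) (W (inord 1) (inord 3)) (W (inord 1) (inord 4)) (W (inord 2) (inord 0)) (W (inord 2) (inord 1)) (W (inord 2) (inord 2)) (W (inord 2) (inord 3)) (W (inord 2) (inord 4)) (W (inord 3) (inord 0)) (W (inord 3) (inord 1)) (W (inord 3) (inord 2)) (W (inord 3) (inord 3)) (W (inord 3) (inord 4)) (W (inord 4) (inord 0)) (W (inord 4) (inord 1)) (W (inord 4) (inord 2)) (W (inord 4) (inord 3)) (W (inord 4) (inord 4)).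
by rewrite -!vmxK.
Qed.

Lemma nondeg_x (y : 'I_8 -> C) (U : 'M[C]_5) :
  image_ad f0m U -> lie (lie (em + \sum_k y k *: Gb k) U) f0m = 0 -> U = 0.
Proof.
case=> W [_ ->]; rewrite xmat_eq img_form.
exact: nondeg_explicit.
Qed.

End Abs.

Section Expl6.
Variable C : numClosedFieldType.
Local Notation mx := (@mx C).
Local Notation vmx := (@vmx C).
Local Notation em := (@em C).
Local Notation h0m := (@h0m C).
Local Notation Bg := (@Bg C).
Definition Hform (p03 p04 p13 p14 p23 p24 p34 : C) : 'M[C]_5 := mx (fun i j => match i, j with 0%N, 0%N => (2) | 0%N, 1%N => (p23) | 0%N, 2%N => (p24) | 0%N, 3%N => (p03) | 0%N, 4%N => (p04) | 1%N, 1%N => (1) | 1%N, 2%N => (p34) | 1%N, 3%N => (p13) | 1%N, 4%N => (p14) | 2%N, 3%N => (p23) | 2%N, 4%N => (p24) | 3%N, 3%N => ((-(1))) | 3%N, 4%N => (p34) | 4%N, 4%N => ((-(2))) | _, _ => 0 end).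
Definition gmat (p03 p04 p13 p14 p23 p24 p34 : C) : 'M[C]_5 := mx (fun i j => match i, j with 0%N, 0%N => (1) | 0%N, 1%N => ((-(1)) * p23) | 0%N, 2%N => ((-(1/2)) * p24 + (1/2) * p23 * p34) | 0%N, 3%N => ((1/3) * p23 * p24 + (-(1/6)) * p23 * p23 * p34 + (1/6) * p13 * p23 + (-(1/3)) * p03) | 0%N, 4%N => ((1/8) * p24 * p24 + (-(1/6)) * p23 * p24 * p34 + (1/24) * p23 * p23 * p34 * p34 + (1/12) * p14 * p23 + (-(1/12)) * p13 * p23 * p34 + (-(1/4)) * p04 + (1/4) * p03 * p34) | 1%N, 1%N => (1) | 1%N, 2%N => ((-(1)) * p34) | 1%N, 3%N => ((1/2) * p23 * p34 + (-(1/2)) * p13) | 1%N, 4%N => ((1/6) * p24 * p34 + (-(1/6)) * p23 * p34 * p34 + (-(1/3)) * p14 + (1/3) * p13 * p34) | 2%N, 2%N => (1) | 2%N, 3%N => ((-(1)) * p23) | 2%N, 4%N => ((-(1/2)) * p24 + (1/2) * p23 * p34) | 3%N, 3%N => (1) | 3%N, 4%N => ((-(1)) * p34) | 4%N, 4%N => (1) | _, _ => 0 end).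
Definition ginvmat (p03 p04 p13 p14 p23 p24 p34 : C) : 'M[C]_5 := mx (fun i j => match i, j with 0%N, 0%N => (1) | 0%N, 1%N => (p23) | 0%N, 2%N => ((1/2) * p24 + (1/2) * p23 * p34) | 0%N, 3%N => ((1/6) * p23 * p24 + (1/6) * p23 * p23 * p34 + (1/3) * p13 * p23 + (1/3) * p03) | 0%N, 4%N => ((1/8) * p24 * p24 + (1/6) * p23 * p24 * p34 + (1/24) * p23 * p23 * p34 * p34 + (1/4) * p14 * p23 + (1/12) * p13 * p23 * p34 + (1/4) * p04 + (1/12) * p03 * p34) | 1%N, 1%N => (1) | 1%N, 2%N => (p34) | 1%N, 3%N => ((1/2) * p23 * p34 + (1/2) * p13) | 1%N, 4%N => ((1/3) * p24 * p34 + (1/6) * p23 * p34 * p34 + (1/3) * p14 + (1/6) * p13 * p34) | 2%N, 2%N => (1) | 2%N, 3%N => (p23) | 2%N, 4%N => ((1/2) * p24 + (1/2) * p23 * p34) | 3%N, 3%N => (1) | 3%N, 4%N => (p34) | 4%N, 4%N => (1) | _, _ => 0 end).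
Lemma one_mx5 : (1%:M : 'M[C]_5) = mx (fun i j => (i == j)%:R).
Proof. apply/matrixP => i j; rewrite !mxE; congr (_%:R); apply/eqP/eqP => [->//|h]; exact: val_inj. Qed.
Lemma g_ginv (p03 p04 p13 p14 p23 p24 p34 : C) : gmat p03 p04 p13 p14 p23 p24 p34 *m ginvmat p03 p04 p13 p14 p23 p24 p34 = 1%:M.
Proof. by rewrite /gmat /ginvmat mul_mx one_mx5; apply: mx_ext; ent; rewrite /mul5 /=; field. Qed.
Lemma g_e (p03 p04 p13 p14 p23 p24 p34 : C) : gmat p03 p04 p13 p14 p23 p24 p34 *m em = em *m gmat p03 p04 p13 p14 p23 p24 p34.
Proof. by rewrite /gmat /em !mul_mx; apply: mx_ext; ent; rewrite /mul5 /=; field. Qed.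
Lemma g_h (p03 p04 p13 p14 p23 p24 p34 : C) : gmat p03 p04 p13 p14 p23 p24 p34 *m h0m = Hform p03 p04 p13 p14 p23 p24 p34 *m gmat p03 p04 p13 p14 p23 p24 p34.
Proof. by rewrite /gmat /h0m /Hform !mul_mx; apply: mx_ext; ent; rewrite /mul5 /=; field. Qed.
Lemma triple_explicit (a00 a01 a02 a03 a04 a10 a11 a12 a13 a14 a20 a21 a22 a23 a24 a30 a31 a32 a33 a34 a40 a41 a42 a43 a44 : C) : lie (vmx a00 a01 a02 a03 a04 a10 a11 a12 a13 a14 a20 a21 a22 a23 a24 a30 a31 a32 a33 a34 a40 a41 a42 a43 a44) em = 2%:R *: em -> \tr (vmx a00 a01 a02 a03 a04 a10 a11 a12 a13 a14 a20 a21 a22 a23 a24 a30 a31 a32 a33 a34 a40 a41 a42 a43 a44) = 0 ->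
  (forall b, (b < 8)%N -> killing (vmx a00 a01 a02 a03 a04 a10 a11 a12 a13 a14 a20 a21 a22 a23 a24 a30 a31 a32 a33 a34 a40 a41 a42 a43 a44) (Bg b) = 0) ->
  vmx a00 a01 a02 a03 a04 a10 a11 a12 a13 a14 a20 a21 a22 a23 a24 a30 a31 a32 a33 a34 a40 a41 a42 a43 a44 = Hform a03 a04 a13 a14 a23 a24 a34.
Proof.
rewrite /vmx /em lie_mx scale_mx => /mx_eqE L; rewrite tr_mx /= => T hK.
have L00 := L 0%N 0%N isT isT; rewrite /mul5 /= in L00.
have L01 := L 0%N 1%N isT isT; rewrite /mul5 /= in L01.
have L02 := L 0%N 2%N isT isT; rewrite /mul5 /= in L02.
have L03 := L 0%N 3%N isT isT; rewrite /mul5 /= in L03.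
have L04 := L 0%N 4%N isT isT; rewrite /mul5 /= in L04.
have L10 := L 1%N 0%N isT isT; rewrite /mul5 /= in L10.
have L11 := L 1%N 1%N isT isT; rewrite /mul5 /= in L11.
have L12 := L 1%N 2%N isT isT; rewrite /mul5 /= in L12.
have L13 := L 1%N 3%N isT isT; rewrite /mul5 /= in L13.
have L14 := L 1%N 4%N isT isT; rewrite /mul5 /= in L14.
have L20 := L 2%N 0%N isT isT; rewrite /mul5 /= in L20.
have L21 := L 2%N 1%N isT isT; rewrite /mul5 /= in L21.
have L22 := L 2%N 2%N isT isT; rewrite /mul5 /= in L22.
have L23 := L 2%N 3%N isT isT; rewrite /mul5 /= in L23.
have L24 := L 2%N 4%N isT isT; rewrite /mul5 /= in L24.
have L32 := L 3%N 2%N isT isT; rewrite /mul5 /= in L32.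
have L33 := L 3%N 3%N isT isT; rewrite /mul5 /= in L33.
have L34 := L 3%N 4%N isT isT; rewrite /mul5 /= in L34.
have L42 := L 4%N 2%N isT isT; rewrite /mul5 /= in L42.
have L43 := L 4%N 3%N isT isT; rewrite /mul5 /= in L43.
have L44 := L 4%N 4%N isT isT; rewrite /mul5 /= in L44.
have K0 := hK 0%N isT; rewrite /killing /Bg mul_mx tr_mx /mul5 /= in K0.
have K1 := hK 1%N isT; rewrite /killing /Bg mul_mx tr_mx /mul5 /= in K1.
have K2 := hK 2%N isT; rewrite /killing /Bg mul_mx tr_mx /mul5 /= in K2.
have K3 := hK 3%N isT; rewrite /killing /Bg mul_mx tr_mx /mul5 /= in K3.
have K4 := hK 4%N isT; rewrite /killing /Bg mul_mx tr_mx /mul5 /= in K4.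
have K5 := hK 5%N isT; rewrite /killing /Bg mul_mx tr_mx /mul5 /= in K5.
have K6 := hK 6%N isT; rewrite /killing /Bg mul_mx tr_mx /mul5 /= in K6.
have K7 := hK 7%N isT; rewrite /killing /Bg mul_mx tr_mx /mul5 /= in K7.
clear L hK.
have Ea20 : a20 = 0 by apply: (solve_var (c := (-(1))) L00); field.
subst a20.
have Ea21 : a21 = 0 by apply: (solve_var (c := (-(1))) L01); field.
subst a21.
have Ea30 : a30 = 0 by apply: (solve_var (c := (-(1))) L10); field.
subst a30.
have Ea31 : a31 = 0 by apply: (solve_var (c := (-(1))) L11); field.
subst a31.
have Ea40 : a40 = 0 by apply: (solve_var (c := (-(1))) L20); field.
subst a40.
have Ea41 : a41 = 0 by apply: (solve_var (c := (-(1))) L21); field.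
subst a41.
have Ea42 : a42 = 0 by apply: (solve_var (c := (-(1))) L22); field.
subst a42.
have Ea43 : a43 = 0 by apply: (solve_var (c := (-(1))) L23); field.
subst a43.
have Ea32 : a32 = 0 by apply: (solve_var (c := 1) L34); field.
subst a32.
have Ea10 : a10 = 0 by apply: (solve_var (c := 1) L12); field.
subst a10.
have Ea01 : a01 = (a23) by apply: (solve_var (c := 1) L03); field.
subst a01.
have Ea02 : a02 = (a24) by apply: (solve_var (c := 1) L04); field.
subst a02.
have Ea12 : a12 = (a34) by apply: (solve_var (c := 1) L14); field.
subst a12.
have Ea00 : a00 = (2 + a22) by apply: (solve_var (c := 1) L02); field.
subst a00.
have Ea11 : a11 = (2 + a33) by apply: (solve_var (c := 1) L13); field.
subst a11.
have Ea22 : a22 = (2 + a44) by apply: (solve_var (c := 1) L24); field.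
subst a22.
have Ea33 : a33 = ((-(4)) + (-(3/2)) * a44) by apply: (solve_var (c := (1/2)) T); field.
subst a33.
have Ea44 : a44 = ((-(2))) by apply: (solve_var (c := (-(1/150))) K7); field.
subst a44.
by rewrite /Hform; apply: mx_ext; ent; rewrite /=; field.
Qed.
Lemma kzero_explicit (a00 a01 a02 a03 a04 a10 a11 a12 a13 a14 a20 a21 a22 a23 a24 a30 a31 a32 a33 a34 a40 a41 a42 a43 a44 : C) : lie h0m (vmx a00 a01 a02 a03 a04 a10 a11 a12 a13 a14 a20 a21 a22 a23 a24 a30 a31 a32 a33 a34 a40 a41 a42 a43 a44) = - (2%:R *: vmx a00 a01 a02 a03 a04 a10 a11 a12 a13 a14 a20 a21 a22 a23 a24 a30 a31 a32 a33 a34 a40 a41 a42 a43 a44) -> lie em (vmx a00 a01 a02 a03 a04 a10 a11 a12 a13 a14 a20 a21 a22 a23 a24 a30 a31 a32 a33 a34 a40 a41 a42 a43 a44) = 0 ->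
  vmx a00 a01 a02 a03 a04 a10 a11 a12 a13 a14 a20 a21 a22 a23 a24 a30 a31 a32 a33 a34 a40 a41 a42 a43 a44 = 0.
Proof.
rewrite /vmx /em /h0m !lie_mx scale_mx opp_mx zero_mx => /mx_eqE L1 /mx_eqE L2.
have M00 := L1 0%N 0%N isT isT; rewrite /mul5 /= in M00.
have M01 := L1 0%N 1%N isT isT; rewrite /mul5 /= in M01.
have M02 := L1 0%N 2%N isT isT; rewrite /mul5 /= in M02.
have M03 := L1 0%N 3%N isT isT; rewrite /mul5 /= in M03.
have M04 := L1 0%N 4%N isT isT; rewrite /mul5 /= in M04.
have M10 := L1 1%N 0%N isT isT; rewrite /mul5 /= in M10.
have M11 := L1 1%N 1%N isT isT; rewrite /mul5 /= in M11.
have M12 := L1 1%N 2%N isT isT; rewrite /mul5 /= in M12.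
have M13 := L1 1%N 3%N isT isT; rewrite /mul5 /= in M13.
have M14 := L1 1%N 4%N isT isT; rewrite /mul5 /= in M14.
have M21 := L1 2%N 1%N isT isT; rewrite /mul5 /= in M21.
have M22 := L1 2%N 2%N isT isT; rewrite /mul5 /= in M22.
have M23 := L1 2%N 3%N isT isT; rewrite /mul5 /= in M23.
have M24 := L1 2%N 4%N isT isT; rewrite /mul5 /= in M24.
have M30 := L1 3%N 0%N isT isT; rewrite /mul5 /= in M30.
have M32 := L1 3%N 2%N isT isT; rewrite /mul5 /= in M32.
have M33 := L1 3%N 3%N isT isT; rewrite /mul5 /= in M33.
have M34 := L1 3%N 4%N isT isT; rewrite /mul5 /= in M34.
have M40 := L1 4%N 0%N isT isT; rewrite /mul5 /= in M40.
have M41 := L1 4%N 1%N isT isT; rewrite /mul5 /= in M41.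
have M43 := L1 4%N 3%N isT isT; rewrite /mul5 /= in M43.
have M44 := L1 4%N 4%N isT isT; rewrite /mul5 /= in M44.
have N00 := L2 0%N 0%N isT isT; rewrite /mul5 /= in N00.
have N01 := L2 0%N 1%N isT isT; rewrite /mul5 /= in N01.
have N02 := L2 0%N 2%N isT isT; rewrite /mul5 /= in N02.
have N03 := L2 0%N 3%N isT isT; rewrite /mul5 /= in N03.
have N04 := L2 0%N 4%N isT isT; rewrite /mul5 /= in N04.
have N10 := L2 1%N 0%N isT isT; rewrite /mul5 /= in N10.
have N11 := L2 1%N 1%N isT isT; rewrite /mul5 /= in N11.
have N12 := L2 1%N 2%N isT isT; rewrite /mul5 /= in N12.
have N13 := L2 1%N 3%N isT isT; rewrite /mul5 /= in N13.
have N14 := L2 1%N 4%N isT isT; rewrite /mul5 /= in N14.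
have N20 := L2 2%N 0%N isT isT; rewrite /mul5 /= in N20.
have N21 := L2 2%N 1%N isT isT; rewrite /mul5 /= in N21.
have N22 := L2 2%N 2%N isT isT; rewrite /mul5 /= in N22.
have N23 := L2 2%N 3%N isT isT; rewrite /mul5 /= in N23.
have N24 := L2 2%N 4%N isT isT; rewrite /mul5 /= in N24.
have N32 := L2 3%N 2%N isT isT; rewrite /mul5 /= in N32.
have N33 := L2 3%N 3%N isT isT; rewrite /mul5 /= in N33.
have N34 := L2 3%N 4%N isT isT; rewrite /mul5 /= in N34.
have N42 := L2 4%N 2%N isT isT; rewrite /mul5 /= in N42.
have N43 := L2 4%N 3%N isT isT; rewrite /mul5 /= in N43.
have N44 := L2 4%N 4%N isT isT; rewrite /mul5 /= in N44.
clear L1 L2.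
have Ea00 : a00 = 0 by apply: (solve_var (c := (1/2)) M00); field.
subst a00.
have Ea01 : a01 = 0 by apply: (solve_var (c := (1/3)) M01); field.
subst a01.
have Ea02 : a02 = 0 by apply: (solve_var (c := (1/4)) M02); field.
subst a02.
have Ea03 : a03 = 0 by apply: (solve_var (c := (1/5)) M03); field.
subst a03.
have Ea04 : a04 = 0 by apply: (solve_var (c := (1/6)) M04); field.
subst a04.
have Ea10 : a10 = 0 by apply: (solve_var (c := 1) M10); field.
subst a10.
have Ea11 : a11 = 0 by apply: (solve_var (c := (1/2)) M11); field.
subst a11.
have Ea12 : a12 = 0 by apply: (solve_var (c := (1/3)) M12); field.
subst a12.
have Ea13 : a13 = 0 by apply: (solve_var (c := (1/4)) M13); field.
subst a13.
have Ea14 : a14 = 0 by apply: (solve_var (c := (1/5)) M14); field.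
subst a14.
have Ea21 : a21 = 0 by apply: (solve_var (c := 1) M21); field.
subst a21.
have Ea22 : a22 = 0 by apply: (solve_var (c := (1/2)) M22); field.
subst a22.
have Ea23 : a23 = 0 by apply: (solve_var (c := (1/3)) M23); field.
subst a23.
have Ea24 : a24 = 0 by apply: (solve_var (c := (1/4)) M24); field.
subst a24.
have Ea30 : a30 = 0 by apply: (solve_var (c := (-(1))) M30); field.
subst a30.
have Ea32 : a32 = 0 by apply: (solve_var (c := 1) M32); field.
subst a32.
have Ea33 : a33 = 0 by apply: (solve_var (c := (1/2)) M33); field.
subst a33.
have Ea34 : a34 = 0 by apply: (solve_var (c := (1/3)) M34); field.
subst a34.
have Ea40 : a40 = 0 by apply: (solve_var (c := (-(1/2))) M40); field.
subst a40.
have Ea41 : a41 = 0 by apply: (solve_var (c := (-(1))) M41); field.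
subst a41.
have Ea43 : a43 = 0 by apply: (solve_var (c := 1) M43); field.
subst a43.
have Ea44 : a44 = 0 by apply: (solve_var (c := (1/2)) M44); field.
subst a44.
have Ea20 : a20 = 0 by apply: (solve_var (c := 1) N00); field.
subst a20.
have Ea31 : a31 = 0 by apply: (solve_var (c := 1) N11); field.
subst a31.
have Ea42 : a42 = 0 by apply: (solve_var (c := 1) N22); field.
subst a42.
by apply: mx_ext; ent; rewrite /=; field.
Qed.
End Expl6.

Section Triple.
Variable C : numClosedFieldType.
Local Notation em := (@em C).
Local Notation f0m := (@f0m C).
Local Notation h0m := (@h0m C).
Local Notation Bg := (@Bg C).
Implicit Types A B g gi : 'M[C]_5.

Lemma conj_lie g gi A B : g *m gi = 1%:M ->
  lie (gi *m A *m g) (gi *m B *m g) = gi *m lie A B *m g.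
Proof.
move=> ggi; rewrite /lie mulmxBr mulmxBl !mulmxA.
by rewrite -!(mulmxA _ g gi) ggi !mulmx1.
Qed.

Lemma conj_sub g gi A B : gi *m (A - B) *m g = gi *m A *m g - gi *m B *m g.
Proof. by rewrite mulmxBr mulmxBl. Qed.

Lemma conj_scale g gi (a : C) A : gi *m (a *: A) *m g = a *: (gi *m A *m g).
Proof. by rewrite -scalemxAr -scalemxAl. Qed.

Lemma triple_class (h f : 'M[C]_5) : is_sl2_triple h em f ->
  exists g gi : 'M[C]_5, [/\ g *m gi = 1%:M, gi *m g = 1%:M, g *m em = em *m g & f = g *m f0m *m gi].
Proof.
case=> th te tf [he hf ef].
have hK : forall b, (b < 8)%N -> killing h (Bg b) = 0.
  move=> b hb; rewrite -ef killingC killing_lie.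
  by case: (Bg_cent C hb) => _ ->; rewrite killing0l.
have Hh := @triple_explicit C (h (inord 0) (inord 0)) (h (inord 0) (inord 1)) (h (inord 0) (inord 2)) (h (inord 0) (inord 3)) (h (inord 0) (inord 4)) (h (inord 1) (inord 0)) (h (inord 1) (inord 1)) (h (inord 1) (inord 2)) (h (inord 1) (inord 3)) (h (inord 1) (inord 4)) (h (inord 2) (inord 0)) (h (inord 2) (inord 1)) (h (inord 2) (inord 2)) (h (inord 2) (inord 3)) (h (inord 2) (inord 4)) (h (inord 3) (inord 0)) (h (inord 3) (inord 1)) (h (inord 3) (inord 2)) (h (inord 3) (inord 3)) (h (inord 3) (inord 4)) (h (inord 4) (inord 0)) (h (inord 4) (inord 1)) (h (inord 4) (inord 2)) (h (inord 4) (inord 3)) (h (inord 4) (inord 4)).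
rewrite -!vmxK in Hh.
have {}Hh := Hh he th hK.
set g := gmat (h (inord 0) (inord 3)) (h (inord 0) (inord 4)) (h (inord 1) (inord 3)) (h (inord 1) (inord 4)) (h (inord 2) (inord 3)) (h (inord 2) (inord 4)) (h (inord 3) (inord 4)).
set gi := ginvmat (h (inord 0) (inord 3)) (h (inord 0) (inord 4)) (h (inord 1) (inord 3)) (h (inord 1) (inord 4)) (h (inord 2) (inord 3)) (h (inord 2) (inord 4)) (h (inord 3) (inord 4)).
have ggi : g *m gi = 1%:M by apply: g_ginv.
have gig : gi *m g = 1%:M by rewrite mulmx1C.
have ge : g *m em = em *m g by apply: g_e.
have gh : g *m h0m = h *m g by rewrite [in RHS]Hh; apply: g_h.
have h0E : h0m = gi *m h *m g by rewrite -mulmxA -gh mulmxA gig mul1mx.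
have eE : em = gi *m em *m g by rewrite -mulmxA -ge mulmxA gig mul1mx.
exists g, gi; split => //.
set k := gi *m f *m g - f0m.
have k1 : lie h0m k = - (2%:R *: k).
  rewrite /k lieBr lie_h0_f0 {1}h0E conj_lie // hf.
  by rewrite mulmxN mulNmx conj_scale scalerBr opprB opprK addrC.
have k2 : lie em k = 0.
  by rewrite /k lieBr lie_e_f0 {1}eE conj_lie // ef -h0E subrr.
have kz := @kzero_explicit C (k (inord 0) (inord 0)) (k (inord 0) (inord 1)) (k (inord 0) (inord 2)) (k (inord 0) (inord 3)) (k (inord 0) (inord 4)) (k (inord 1) (inord 0)) (k (inord 1) (inord 1)) (k (inord 1) (inord 2)) (k (inord 1) (inord 3)) (k (inord 1) (inord 4)) (k (inord 2) (inord 0)) (k (inord 2) (inord 1)) (k (inord 2) (inord 2)) (k (inord 2) (inord 3)) (k (inord 2) (inord 4)) (k (inord 3) (inord 0)) (k (inord 3) (inord 1)) (k (inord 3) (inord 2)) (k (inord 3) (inord 3)) (k (inord 3) (inord 4)) (k (inord 4) (inord 0)) (k (inord 4) (inord 1)) (k (inord 4) (inord 2)) (k (inord 4) (inord 3)) (k (inord 4) (inord 4)).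
rewrite -!vmxK in kz.
have {}kz := kz k1 k2.
move/eqP: kz; rewrite subr_eq0 => /eqP kE.
by rewrite -kE !mulmxA ggi mul1mx -mulmxA ggi mulmx1.
Qed.

End Triple.

Section Conormal.
Variable C : numClosedFieldType.
Local Notation em := (@em C).
Local Notation Bg := (@Bg C).

Definition nprime (Y : 'M[C]_5) : Prop :=
  in_sl5 Y /\ forall j : 'I_5, Y (inord 0) j = 0 /\ ((2 <= j)%N -> Y (inord 1) j = 0).

Definition gcc (A : 'M[C]_5) (k : nat) : C := gec A k.



Lemma cent_sum (c : 'I_8 -> C) : centralizer em (\sum_(k < 8) c k *: Bg k).
Proof.
split.
  by apply: in_sl5_sum => k; apply: in_sl5Z; case: (@Bg_cent C _ (ltn_ord k)).
rewrite lie_suml big1 // => k _; rewrite lieZl; case: (@Bg_cent C _ (ltn_ord k)) => _ ->.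
by rewrite scaler0.
Qed.

Lemma acomp_prop (A : 'M[C]_5) : in_sl5 A ->
  nprime (A - \sum_(k < 8) gec A k *: Bg k).
Proof.
move=> trA; split.
  apply: in_sl5D => //; apply: in_sl5N; exact: (cent_sum (fun k => gec A k)).1.
rewrite [A]vmxK /gec (sum8n (fun k => gec _ k *: Bg k)) /gec !mxE5 // /Bg /vmx !scale_mx !add_mx sub_mx.
move=> j; rewrite -(inord_val j); move: (ltn_ord j); move: (nat_of_ord j) => jj.
case: jj => [|[|[|[|[|jj]]]]] // _; rewrite !mxE5 //=; split; (try by field); rewrite inordK // => /= h; (try discriminate h); by field.
Qed.

Lemma nprime_lie (A B : 'M[C]_5) : nprime A -> nprime B -> nprime (lie A B).
Proof.
move=> nA nB; have [_ hA] := nA; have [_ hB] := nB; split; first exact: in_sl5_lie.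
have row0 : forall (P Q : 'M[C]_5) j, (forall k, P (inord 0) k = 0) -> (P *m Q) (inord 0) j = 0.
  by move=> P Q j h; rewrite mxE big1 // => k _; rewrite h mul0r.
have row1 : forall (P Q : 'M[C]_5) (j : 'I_5), nprime P -> nprime Q -> (2 <= j)%N -> (P *m Q) (inord 1) j = 0.
  move=> P Q j [_ hP] [_ hQ] hj; rewrite mxE big1 // => k _.
  have [k0|k1|kge] : [\/ k = inord 0, k = inord 1 | (2 <= k)%N].
    move: (ltn_ord k); case: k => [[|[|kk]]] hk /=.
    - by constructor 1; apply/val_inj; rewrite /= inordK.
    - by constructor 2; apply/val_inj; rewrite /= inordK.
    - by constructor 3.
  - by rewrite k0 (hQ j).1 mulr0.
  - by rewrite k1 ((hQ j).2 hj) mulr0.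
  - by rewrite ((hP k).2 kge) mul0r.
have subE : forall (P Q : 'M[C]_5) i j, (P - Q) i j = P i j - Q i j by move=> P Q i j; rewrite !mxE.
move=> j; rewrite /lie !subE; split.
  by rewrite !(row0 _ _ _ (fun k => (hA k).1)) !(row0 _ _ _ (fun k => (hB k).1)) subrr.
by move=> hj; rewrite (row1 _ _ _ nA nB hj) (row1 _ _ _ nB nA hj) subrr.
Qed.


Lemma nprime_gec (Y : 'M[C]_5) (k : nat) : nprime Y -> gec Y k = 0.
Proof.
move=> [_ h].
have r0 : forall j, (j < 5)%N -> Y (inord 0) (inord j) = 0 by move=> j _; exact: (h _).1.
have r1 : forall j, (2 <= j)%N -> (j < 5)%N -> Y (inord 1) (inord j) = 0.
  by move=> j hj hj5; apply: (h _).2; rewrite inordK.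
rewrite /gec.
case: k => [|[|[|[|[|[|[|[|k]]]]]]]]; rewrite ?r0 ?r1 //.
by rewrite mul0r oppr0.
Qed.

Lemma conormal_e : conormal (e32 C).
Proof.
exists nprime; rewrite em_e32; split.
- split.
    split; first exact: in_sl50.
    by move=> j; rewrite !mxE.
  move=> a x y [tx hx] [ty hy]; split; first by apply: in_sl5D => //; apply: in_sl5Z.
  move=> j; rewrite !mxE (hx j).1 (hy j).1 mulr0 addr0; split => // hj.
  by rewrite ((hx j).2 hj) ((hy j).2 hj) mulr0 addr0.
- by move=> Y [].
- split.
    move=> Y tY; exists (\sum_(k < 8) gec Y k *: Bg k), (Y - \sum_(k < 8) gec Y k *: Bg k).
    split; [exact: cent_sum | exact: acomp_prop | by rewrite addrC subrK].
  move=> Y [tY lY] nY; rewrite (span_ge tY lY) big1 // => k _.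
  by rewrite nprime_gec // scale0r.
- exact: nprime_lie.
Qed.

End Conormal.

Section Img.
Variable C : numClosedFieldType.
Local Notation f0m := (@f0m C).
Implicit Types U V W : 'M[C]_5.

Lemma img0 : image_ad f0m 0.
Proof. by exists 0; split; [exact: in_sl50 | rewrite lie0r]. Qed.
Lemma imgD U V : image_ad f0m U -> image_ad f0m V -> image_ad f0m (U + V).
Proof.
case=> W1 [t1 ->] [W2 [t2 ->]]; exists (W1 + W2); split; first exact: in_sl5D.
by rewrite lieDr.
Qed.
Lemma imgZ (a : C) U : image_ad f0m U -> image_ad f0m (a *: U).
Proof. by case=> W [t ->]; exists (a *: W); split; [exact: in_sl5Z | rewrite lieZr]. Qed.
Lemma imgN U : image_ad f0m U -> image_ad f0m (- U).
Proof. by move=> h; rewrite -scaleN1r; apply: imgZ. Qed.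
Lemma imgB U V : image_ad f0m U -> image_ad f0m V -> image_ad f0m (U - V).
Proof. by move=> h1 h2; apply: imgD => //; apply: imgN. Qed.
Lemma img_sum (I : finType) (F : I -> 'M[C]_5) : (forall i, image_ad f0m (F i)) -> image_ad f0m (\sum_i F i).
Proof. by move=> h; elim/big_ind: _ => //; [exact: img0 | move=> ? ?; exact: imgD]. Qed.
Lemma img_lie W : in_sl5 W -> image_ad f0m (lie f0m W).
Proof. by move=> t; exists W. Qed.

End Img.


Section Minor.
Variable C : numClosedFieldType.
Lemma minor_nz (M : 'M[C]_8) (a b : 'I_8) : a != b -> M \in unitmx ->
  exists i j, M i a * M j b - M i b * M j a != 0.
Proof.
move=> ab uM.
suff : [exists i, [exists j, M i a * M j b - M i b * M j a != 0]].
  by case/existsP => i /existsP [j hij]; exists i, j.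
apply: contraT; move/existsPn => h.
have h2 : forall i j, M i a * M j b = M i b * M j a.
  move=> i j; have := h i; rewrite negb_exists => /forallP/(_ j); rewrite negbK subr_eq0 => /eqP //.
have inj : forall v : 'cV[C]_8, M *m v = 0 -> v = 0.
  by move=> v hv; rewrite -(mulKmx uM v) hv mulmx0.
have [j ja] : exists j, M j a != 0.
  suff : [exists j, M j a != 0] by case/existsP => j hj; exists j.
  apply: contraT; move/existsPn => hz.
  have : M *m (delta_mx a 0 : 'cV[C]_8) = 0.
    apply/matrixP => i k; rewrite !mxE (bigD1 a) //= big1 ?addr0.
      by move: (hz i); rewrite negbK => /eqP ->; rewrite mul0r.
    by move=> l la; rewrite mxE (negPf la) mulr0.
  move/inj => /(congr1 (fun N : 'cV[C]_8 => N a 0)); rewrite !mxE !eqxx => /eqP; rewrite oner_eq0.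
  by [].
set lam := M j b / M j a.
have : M *m ((delta_mx b 0 : 'cV[C]_8) - lam *: delta_mx a 0) = 0.
  apply/matrixP => i k; rewrite ord1 mulmxBr -scalemxAr !mxE.
  rewrite (bigD1 b) //= big1 ?addr0; last by move=> l lb; rewrite mxE (negPf lb) mulr0.
  rewrite (bigD1 a) //= big1 ?addr0; last by move=> l la; rewrite mxE (negPf la) mulr0.
  rewrite !mxE !eqxx !mulr1 /lam.
  apply/eqP; rewrite subr_eq0; apply/eqP.
  have := h2 i j; move=> e2.
  by rewrite mulrAC [M j b * _]mulrC e2 mulfK.
move/inj => /(congr1 (fun N : 'cV[C]_8 => N b 0)); rewrite !mxE !eqxx (negPf (negbT (introF eqP _))) ?mulr0 ?subr0 //.
- by move/eqP; rewrite oner_eq0.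
- by move=> e; move: ab; rewrite e eqxx.
Qed.
End Minor.

Section F0.
Variable C : numClosedFieldType.
Local Notation em := (@em C).
Local Notation f0m := (@f0m C).
Local Notation Bg := (@Bg C).
Local Notation Gb := (@Gb C).
Local Notation K0 := (@K0 C).
Variables (Z : 'I_8 -> 'M[C]_5) (X : 'I_16 -> 'M[C]_5) (Zbar : 'I_8 -> 'M[C]_5).
Hypothesis hZ : is_basis_of (centralizer em) Z.
Hypothesis hX : is_basis_of (image_ad f0m) X.
Hypothesis hD : is_dual_Zpart Z X Zbar.

Lemma X_img l : image_ad f0m (X l).
Proof. by case: hX. Qed.

Lemma comb_img (c : 'I_16 -> C) : image_ad f0m (\sum_l c l *: X l).
Proof. by apply: img_sum => l; apply: imgZ; exact: X_img. Qed.

Lemma perp_img (A : 'M[C]_5) (phi : 'M[C]_5 -> C) :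
  (forall a U V, phi (a *: U + V) = a * phi U + phi V) ->
  (forall l, phi (X l) = 0) -> forall V, image_ad f0m V -> phi V = 0.
Proof.
move=> lin h V; case: hX => _ _ hsp; move/hsp => [c ->].
have phi0 : phi 0 = 0.
  by have := lin 1 0 0; rewrite scale1r addr0 mul1r => /eqP; rewrite addrC -subr_eq subrr eq_sym => /eqP.
elim/big_ind: _ => //.
  by move=> U1 U2 h1 h2; have := lin 1 U1 U2; rewrite scale1r mul1r h1 h2 addr0.
by move=> l _; have := lin (c l) (X l) 0; rewrite addr0 phi0 addr0 h mulr0.
Qed.

Lemma Zbar_f0 s : lie f0m (Zbar s) = 0.
Proof.
case: hD => tZb _ dX.
have T0 : lie (Zbar s) f0m = 0.
  apply: nondeg_sl5; first exact: in_sl5_lie.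
  move=> V tV; rewrite -killing_lie.
  apply: (@perp_img (Zbar s) (fun U => killing (Zbar s) U)) => //.
    by move=> a U W; rewrite killingDr killingZr.
  exact: img_lie.
by rewrite lieC T0 oppr0.
Qed.

Definition Mc (i : 'I_8) (a : nat) : C := gec (Z i) a.
Definition Yc (s : 'I_8) (a : nat) : C := gfc (Zbar s) a.

Lemma Z_expand i : Z i = \sum_(a < 8) Mc i a *: Bg a.
Proof. by case: hZ => hin _ _; case: (hin i) => t l; exact: span_ge. Qed.

Lemma Zbar_expand s : Zbar s = \sum_(a < 8) Yc s a *: Gb a.
Proof. by case: hD => t _ _; apply: span_gf => //; exact: Zbar_f0. Qed.

Definition Mm : 'M[C]_8 := \matrix_(i, a) Mc i a.
Definition Ym : 'M[C]_8 := \matrix_(s, a) Yc s a.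
Definition K0m : 'M[C]_8 := \matrix_(a, b) K0 a b.

Lemma dual_mx : Ym *m K0m *m Mm^T = 1%:M.
Proof.
apply/matrixP => s j; rewrite !mxE.
case: hD => _ dZ _; rewrite -dZ Zbar_expand Z_expand killing_suml.
transitivity (\sum_(a < 8) \sum_(k < 8) Yc s a * K0 a k * Mc j k).
  rewrite exchange_big /=; apply: eq_bigr => k _; rewrite !mxE big_distrl /=.
  by apply: eq_bigr => a _; rewrite !mxE.
apply: eq_bigr => a _; rewrite killing_sumr; apply: eq_bigr => k _.
rewrite killingZl killingZr (@K0E C) //.
ring.
Qed.

Lemma Mm_unit : Mm \in unitmx.
Proof.
have := dual_mx; rewrite -mulmxA => /mulmx1_unit [_].
by rewrite unitmx_mul unitmx_tr => /andP[].
Qed.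

Lemma Ym_unit : Ym \in unitmx.
Proof. by have := dual_mx; rewrite -mulmxA => /mulmx1_unit []. Qed.

Definition yv (q : 'I_8 -> C) (a : 'I_8) : C := \sum_s q s * Yc s a.

Lemma qpoint_expand q : qpoint Zbar q = \sum_(a < 8) yv q a *: Gb a.
Proof.
rewrite /qpoint (eq_bigr (fun s => q s *: \sum_(a < 8) Yc s a *: Gb a)); last by move=> s _; rewrite Zbar_expand.
rewrite (eq_bigr (fun s => \sum_(a < 8) (q s * Yc s a) *: Gb a)); last first.
  by move=> s _; rewrite scaler_sumr; apply: eq_bigr => a _; rewrite scalerA.
rewrite exchange_big /=; apply: eq_bigr => a _.
by rewrite /yv scaler_suml.
Qed.

Definition xq q := em + qpoint Zbar q.

Lemma xq_expand q : xq q = em + \sum_(a < 8) yv q a *: Gb a.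
Proof. by rewrite /xq qpoint_expand. Qed.

Lemma ND q U : image_ad f0m U -> (forall l, killing (xq q) (lie U (X l)) = 0) -> U = 0.
Proof.
move=> iU h.
have h2 : forall V, image_ad f0m V -> killing (xq q) (lie U V) = 0.
  apply: (@perp_img U (fun V => killing (xq q) (lie U V))) => //.
  by move=> a V W; rewrite lieDr lieZr killingDr killingZr.
have T0 : lie (lie (xq q) U) f0m = 0.
  apply: nondeg_sl5; first exact: in_sl5_lie.
  by move=> W tW; rewrite -killing_lie -killing_lie h2 //; exact: img_lie.
by apply: (nondeg_x (y := yv q)) => //; rewrite -xq_expand.
Qed.

Lemma CN_unit q : C_N em X Zbar q \in unitmx.
Proof.
rewrite -row_free_unit; apply: inj_row_free => v hv.
have U0 : \sum_l v 0 l *: X l = 0.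
  apply: (@ND q); first exact: comb_img.
  move=> m; have := congr1 (fun M : 'rV[C]_16 => M 0 m) hv; rewrite !mxE => <-.
  rewrite lie_suml killing_sumr; apply: eq_bigr => l _.
  by rewrite !mxE lieZl killingZr.
case: hX => _ hind _; apply/rowP => l; rewrite mxE (hind (fun l => v 0 l)) //.
Qed.

Lemma kill_e_Z i V : killing em (lie (Z i) V) = 0.
Proof.
case: hZ => hin _ _; case: (hin i) => _ l.
by rewrite killing_lie lieC l oppr0 killing0l.
Qed.

Definition Ci q := invmx (C_N em X Zbar q).
Definition Um q : 'M[C]_(8,16) := (D_N Z X Zbar q)^T *m Ci q.
Definition vv q i := Z i + \sum_l Um q i l *: X l.

Lemma vv_orth q i m : killing (xq q) (lie (vv q i) (X m)) = 0.
Proof.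
rewrite /vv lieDl killingDr lie_suml killing_sumr.
rewrite (eq_bigr (fun l => Um q i l * C_N em X Zbar q l m)); last first.
  by move=> l _; rewrite lieZl killingZr; congr (_ * _); rewrite mxE /xq.
have -> : \sum_l Um q i l * C_N em X Zbar q l m = (Um q *m C_N em X Zbar q) i m by rewrite mxE.
rewrite /Um /Ci -mulmxA mulVmx ?CN_unit // mulmx1 mxE mxE.
rewrite /xq killingDl (kill_e_Z i (X m)) add0r lieC killingNr.
by rewrite addrC subrr.
Qed.

Definition yy q (k : nat) : C := yv q (inord k).
Definition wq q (a : nat) : 'M[C]_5 := Bg a + lie f0m (@Vm C a (yy q 0) (yy q 1) (yy q 2) (yy q 3) (yy q 4) (yy q 5) (yy q 6) (yy q 7)).

Lemma xq_xmat q : xq q = @xmat C (yy q 0) (yy q 1) (yy q 2) (yy q 3) (yy q 4) (yy q 5) (yy q 6) (yy q 7).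
Proof. by rewrite xq_expand xmat_eq. Qed.

Lemma lie_xw q (a : nat) : (a < 8)%N -> lie (xq q) (wq q a) = @Qm C a (yy q 0) (yy q 1) (yy q 2) (yy q 3) (yy q 4) (yy q 5) (yy q 6) (yy q 7).
Proof. by move=> ha; rewrite xq_xmat /wq Qm_eq. Qed.

Lemma wq_orth q (a : 'I_8) m : killing (xq q) (lie (wq q a) (X m)) = 0.
Proof.
case: (X_img m) => W [_ ->].
by rewrite killing_lie lie_xw // killing_lie Qm_f0 // killing0l.
Qed.

Definition ws q i := \sum_(a < 8) Mc i a *: wq q a.

Lemma vv_ws q i : vv q i = ws q i.
Proof.
apply/eqP; rewrite -subr_eq0; apply/eqP.
apply: (@ND q).
  rewrite /vv /ws /wq (eq_bigr (fun a : 'I_8 => Mc i a *: Bg a + Mc i a *: lie f0m (@Vm C a (yy q 0) (yy q 1) (yy q 2) (yy q 3) (yy q 4) (yy q 5) (yy q 6) (yy q 7)))); last first.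
    by move=> a _; rewrite scalerDr.
  rewrite big_split /= -Z_expand opprD addrA addrAC addrAC [Z i + _ - Z i]addrAC subrr add0r.
  apply: imgB; first exact: comb_img.
  apply: img_sum => a; apply: imgZ; apply: img_lie; exact: Vm_tr.
move=> m; rewrite lieBl killingBr vv_orth /ws lie_suml killing_sumr big1 ?subrr //.
by move=> a _; rewrite lieZl killingZr wq_orth mulr0.
Qed.

Lemma Lambda_formula q i j : Lambda_N em Z X Zbar q i j = killing (xq q) (lie (vv q i) (Z j)).
Proof.
rewrite /Lambda_N mxE /vv lieDl killingDr lie_suml killing_sumr.
congr (_ + _).
  by rewrite mxE /xq killingDl (kill_e_Z i (Z j)) add0r.
rewrite mxE; apply: eq_bigr => l _.
rewrite lieZl killingZr /Um /Ci mxE; congr (_ * _).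
by rewrite mxE /xq killingDl (lieC (X l)) !killingNr (kill_e_Z j (X l)) oppr0 add0r.
Qed.

Lemma Lambda_expand q i j : Lambda_N em Z X Zbar q i j =
  \sum_(a < 8) \sum_(b < 8) Mc i a * Mc j b * interp id (@yf C (yy q 0) (yy q 1) (yy q 2) (yy q 3) (yy q 4) (yy q 5) (yy q 6) (yy q 7)) (@lamexpr C a b).
Proof.
rewrite Lambda_formula vv_ws /ws lie_suml killing_sumr; apply: eq_bigr => a _.
rewrite lieZl killingZr {1}(Z_expand j) lie_sumr killing_sumr big_distrr /=.
apply: eq_bigr => b _.
rewrite lieZr killingZr killing_lie lie_xw // lam_eval //.
ring.
Qed.

Definition Ylin (k : nat) : {mpoly C[8]} := if (k < 8)%N then \sum_s Yc s k *: 'X_s else 0.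

Definition Pm : 'M[{mpoly C[8]}]_8 := \matrix_(i, j)
  \sum_(a < 8) \sum_(b < 8) (Mc i a * Mc j b) *: interp (fun c => c%:MP) Ylin (@lamexpr C a b).

Lemma yy_E q k : (k < 8)%N -> yy q k = \sum_s q s * Yc s k.
Proof. by move=> hk; rewrite /yy /yv inordK. Qed.

Lemma Ylin_eval q k : (Ylin k).@[q] = @yf C (yy q 0) (yy q 1) (yy q 2) (yy q 3) (yy q 4) (yy q 5) (yy q 6) (yy q 7) k.
Proof.
rewrite /Ylin; case: ltnP => hk.
  rewrite (big_morph (meval q) (@mevalD _ _ q) (meval0 q)).
  have -> : \sum_s (Yc s k *: 'X_s : {mpoly C[8]}).@[q] = yy q k.
    by rewrite yy_E //; apply: eq_bigr => s _; rewrite mevalZ mevalXU mulrC.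
  by do 8 (case: k hk => [|k] hk //).
rewrite meval0; case: k hk => [|[|[|[|[|[|[|[|k]]]]]]]] //.
Qed.

Lemma P_eval q i j : Lambda_N em Z X Zbar q i j = (Pm i j).@[q].
Proof.
rewrite Lambda_expand mxE (big_morph (meval q) (@mevalD _ _ q) (meval0 q)); apply: eq_bigr => a _.
rewrite (big_morph (meval q) (@mevalD _ _ q) (meval0 q)); apply: eq_bigr => b _.
rewrite mevalZ interp_meval; congr (_ * _).
by apply: interp_ext => k; rewrite Ylin_eval.
Qed.

Lemma Ylin_size k : (msize (Ylin k) <= 2)%N.
Proof.
rewrite /Ylin; case: ifP => _; last by rewrite msize0.
apply: leq_trans (msize_sum _ _ _) _; apply/bigmax_leqP_seq => s _ _.
by apply: leq_trans (msizeZ_le _ _) _; rewrite msizeX mdeg1.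
Qed.

Lemma P_size i j : (msize (Pm i j) <= 5)%N.
Proof.
rewrite mxE; apply: leq_trans (msize_sum _ _ _) _; apply/bigmax_leqP_seq => a _ _.
apply: leq_trans (msize_sum _ _ _) _; apply/bigmax_leqP_seq => b _ _.
apply: leq_trans (msizeZ_le _ _) _.
apply: leq_trans (interp_msize _ Ylin_size) _.
by rewrite ltnS lamexpr_deg.
Qed.

Lemma P_big : exists i j, (4 < msize (Pm i j))%N.
Proof.
have ab : (inord 0 : 'I_8) != inord 3 by rewrite -(inj_eq val_inj) /= !inordK.
have [i0 [j0 hm]] := minor_nz ab Mm_unit.
rewrite !mxE !inordK // in hm.
exists i0, j0; rewrite ltnNge; apply/negP => hle.
set wv : 'rV[C]_8 := delta_mx 0 (inord 7) *m invmx Ym.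
pose qt (t : C) := fun s => t * wv 0 s.
have yvt : forall t (a : 'I_8), yv (qt t) a = t * (a == inord 7)%:R.
  move=> t a; rewrite /yv /qt.
  have -> : (a == inord 7)%:R = (wv *m Ym) 0 a.
    by rewrite /wv mulmxKV ?Ym_unit // mxE eqxx.
  rewrite mxE mulr_sumr; apply: eq_bigr => s _; rewrite mxE [Ym _ _]mxE; ring.
have yft : forall t k, @yf C (yy (qt t) 0) (yy (qt t) 1) (yy (qt t) 2) (yy (qt t) 3) (yy (qt t) 4) (yy (qt t) 5) (yy (qt t) 6) (yy (qt t) 7) k = if k == 7%N then t else 0.
  move=> t k; rewrite /yy.
  have ie : forall i j, (i < 8)%N -> (j < 8)%N -> ((inord i : 'I_8) == inord j) = (i == j).
    by move=> i j hi hj; rewrite -(inj_eq val_inj) /= !inordK.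
  rewrite !yvt !ie //.
  by do 8 (case: k => [|k]; first by rewrite /= ?mulr0 ?mulr1).
set c4 := \sum_(a < 8) \sum_(b < 8) Mc i0 a * Mc j0 b * @LT C a b.
set c2 := \sum_(a < 8) \sum_(b < 8) Mc i0 a * Mc j0 b * @LS C a b.
have lamt : forall t, Lambda_N em Z X Zbar (qt t) i0 j0 = c4 * t ^+ 4 + c2 * t ^+ 2.
  move=> t; rewrite Lambda_expand /c4 /c2 !mulr_suml -big_split; apply: eq_bigr => a _.
  rewrite !mulr_suml -big_split; apply: eq_bigr => b _.
  rewrite (interp_ext _ _ (yft t)) lam_line //=; ring.
have c4E : c4 = 6250 / 3 * (Mc i0 0 * Mc j0 3 - Mc i0 3 * Mc j0 0).
  by rewrite /c4 !sum8 !inordK // /LT /=; field.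
have [r [hr1 hr2]] := restrict (Pm i0 j0) (wv 0).
have rE : r = c4 *: 'X^4 + c2 *: 'X^2.
  apply: poly_ext_all => t.
  by rewrite -hr2 -[(fun s => t * wv 0 s)]/(qt t) -P_eval lamt hornerD !hornerZ !hornerXn.
have c4nz : c4 != 0.
  rewrite c4E mulf_neq0 //; rewrite mulf_neq0 //.
    by rewrite pnatr_eq0.
  by rewrite invr_eq0 pnatr_eq0.
have : r`_4 = c4 by rewrite rE coefD !coefZ !coefXn /= mulr1 mulr0 addr0.
rewrite nth_default; last exact: leq_trans hle.
by move=> h; move: c4nz; rewrite -h eqxx.
Qed.

Theorem f0_main : (forall q, C_N em X Zbar q \in unitmx) /\
  exists P : 'M[{mpoly C[8]}]_8,
    (forall (q : 'I_8 -> C) (i j : 'I_8), Lambda_N em Z X Zbar q i j = (P i j).@[q]) /\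
    (\max_(i < 8) \max_(j < 8) msize (P i j))%N = 5%N.
Proof.
split; first exact: CN_unit.
exists Pm; split; first exact: P_eval.
apply/eqP; rewrite eqn_leq; apply/andP; split.
  apply/bigmax_leqP => i _; apply/bigmax_leqP => j _; exact: P_size.
have [i0 [j0 h]] := P_big.
apply: leq_trans h _; apply: leq_trans (leq_bigmax i0).
exact: (leq_bigmax (F := fun j => msize (Pm i0 j)) j0).
Qed.

End F0.

Section Transport.
Variable C : numClosedFieldType.
Local Notation em := (@em C).
Local Notation f0m := (@f0m C).
Variables (g gi f : 'M[C]_5).
Hypotheses (ggi : g *m gi = 1%:M) (gig : gi *m g = 1%:M) (ge : g *m em = em *m g)
  (fE : f = g *m f0m *m gi).

Definition cj (A : 'M[C]_5) := gi *m A *m g.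
Definition uc (A : 'M[C]_5) := g *m A *m gi.

Lemma cjK A : uc (cj A) = A.
Proof. by rewrite /uc /cj !mulmxA ggi mul1mx -mulmxA ggi mulmx1. Qed.
Lemma ucK A : cj (uc A) = A.
Proof. by rewrite /uc /cj !mulmxA gig mul1mx -mulmxA gig mulmx1. Qed.
Lemma cj_lie A B : lie (cj A) (cj B) = cj (lie A B).
Proof. exact: conj_lie. Qed.
Lemma uc_lie A B : lie (uc A) (uc B) = uc (lie A B).
Proof. exact: conj_lie. Qed.
Lemma cj_e : cj em = em.
Proof. by rewrite /cj -mulmxA -ge mulmxA gig mul1mx. Qed.
Lemma uc_e : uc em = em.
Proof. by rewrite -{1}cj_e cjK. Qed.
Lemma cj_f : cj f = f0m.
Proof. by rewrite fE -[g *m f0m *m gi]/(uc f0m) ucK. Qed.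
Lemma uc_f0 : uc f0m = f.
Proof. by rewrite -cj_f cjK. Qed.
Lemma cjD A B : cj (A + B) = cj A + cj B.
Proof. by rewrite /cj mulmxDr mulmxDl. Qed.
Lemma cjZ (a : C) A : cj (a *: A) = a *: cj A.
Proof. by rewrite /cj -scalemxAr -scalemxAl. Qed.
Lemma cj0 : cj 0 = 0.
Proof. by rewrite /cj mulmx0 mul0mx. Qed.
Lemma ucD A B : uc (A + B) = uc A + uc B.
Proof. by rewrite /uc mulmxDr mulmxDl. Qed.
Lemma ucZ (a : C) A : uc (a *: A) = a *: uc A.
Proof. by rewrite /uc -scalemxAr -scalemxAl. Qed.
Lemma uc0 : uc 0 = 0.
Proof. by rewrite /uc mulmx0 mul0mx. Qed.
Lemma cj_sum (m : nat) (c : 'I_m -> C) (B : 'I_m -> 'M[C]_5) :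
  cj (\sum_i c i *: B i) = \sum_i c i *: cj (B i).
Proof.
elim/big_ind2: _ => //; first exact: cj0.
  by move=> x1 x2 y1 y2 <- <-; rewrite cjD.
by move=> i _; rewrite cjZ.
Qed.
Lemma uc_sum (m : nat) (c : 'I_m -> C) (B : 'I_m -> 'M[C]_5) :
  uc (\sum_i c i *: B i) = \sum_i c i *: uc (B i).
Proof.
elim/big_ind2: _ => //; first exact: uc0.
  by move=> x1 x2 y1 y2 <- <-; rewrite ucD.
by move=> i _; rewrite ucZ.
Qed.
Lemma cj_tr A : \tr (cj A) = \tr A.
Proof. by rewrite /cj mxtrace_mulC mulmxA ggi mul1mx. Qed.
Lemma uc_tr A : \tr (uc A) = \tr A.
Proof. by rewrite /uc mxtrace_mulC mulmxA gig mul1mx. Qed.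
Lemma cj_kill A B : killing (cj A) (cj B) = killing A B.
Proof.
rewrite /killing.
have -> : cj A *m cj B = cj (A *m B).
  by rewrite /cj !mulmxA -(mulmxA (gi *m A) g gi) ggi mulmx1.
by rewrite cj_tr.
Qed.

Lemma cent_cj Y : centralizer em Y -> centralizer em (cj Y).
Proof. by case=> t l; split; [rewrite /in_sl5 cj_tr | rewrite -cj_e cj_lie l cj0]. Qed.
Lemma cent_uc Y : centralizer em Y -> centralizer em (uc Y).
Proof. by case=> t l; split; [rewrite /in_sl5 uc_tr | rewrite -uc_e uc_lie l uc0]. Qed.
Lemma img_cj Y : image_ad f Y -> image_ad f0m (cj Y).
Proof.
by case=> W [t ->]; exists (cj W); split; [rewrite /in_sl5 cj_tr | rewrite -cj_lie cj_f].
Qed.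
Lemma img_uc Y : image_ad f0m Y -> image_ad f (uc Y).
Proof.
by case=> W [t ->]; exists (uc W); split; [rewrite /in_sl5 uc_tr | rewrite -uc_lie uc_f0].
Qed.

Lemma basis_cj (S S' : 'M[C]_5 -> Prop) (m : nat) (B : 'I_m -> 'M[C]_5) :
  (forall Y, S Y -> S' (cj Y)) -> (forall Y, S' Y -> S (uc Y)) ->
  is_basis_of S B -> is_basis_of S' (fun i => cj (B i)).
Proof.
move=> h1 h2 [hin hind hsp]; split.
- by move=> i; apply: h1.
- move=> c hc; apply: hind.
  by rewrite -[LHS]cjK cj_sum hc /uc mulmx0 mul0mx.
- move=> Y /h2 /hsp [c hc]; exists c.
  by rewrite -cj_sum -hc ucK.
Qed.

Variables (Z : 'I_8 -> 'M[C]_5) (X : 'I_16 -> 'M[C]_5) (Zbar : 'I_8 -> 'M[C]_5).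

Lemma qpoint_cj q : qpoint (fun s => cj (Zbar s)) q = cj (qpoint Zbar q).
Proof. by rewrite /qpoint cj_sum. Qed.

Lemma CN_cj q : C_N em (fun l => cj (X l)) (fun s => cj (Zbar s)) q = C_N em X Zbar q.
Proof.
apply/matrixP => l m; rewrite !mxE qpoint_cj -{1}cj_e -cjD cj_lie cj_kill //.
Qed.
Lemma DN_cj q : D_N (fun j => cj (Z j)) (fun l => cj (X l)) (fun s => cj (Zbar s)) q = D_N Z X Zbar q.
Proof. by apply/matrixP => l m; rewrite !mxE qpoint_cj cj_lie cj_kill. Qed.
Lemma AN_cj q : A_N (fun j => cj (Z j)) (fun s => cj (Zbar s)) q = A_N Z Zbar q.
Proof. by apply/matrixP => l m; rewrite !mxE qpoint_cj cj_lie cj_kill. Qed.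
Lemma Lambda_cj q : Lambda_N em (fun j => cj (Z j)) (fun l => cj (X l)) (fun s => cj (Zbar s)) q =
  Lambda_N em Z X Zbar q.
Proof. by rewrite /Lambda_N CN_cj DN_cj AN_cj. Qed.

End Transport.

Theorem mainTheorem8 (C : numClosedFieldType) :
  conormal (e32 C) /\
  forall h f : 'M[C]_5, is_sl2_triple h (e32 C) f ->
  forall (Z : 'I_8 -> 'M[C]_5) (X : 'I_16 -> 'M[C]_5) (Zbar : 'I_8 -> 'M[C]_5),
    is_basis_of (centralizer (e32 C)) Z ->
    is_basis_of (image_ad f) X ->
    is_dual_Zpart Z X Zbar ->
    (forall q : 'I_8 -> C, C_N (e32 C) X Zbar q \in unitmx) /\
    exists P : 'M[{mpoly C[8]}]_8,
      (forall (q : 'I_8 -> C) (i j : 'I_8),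
          Lambda_N (e32 C) Z X Zbar q i j = (P i j).@[q]) /\
      (\max_(i < 8) \max_(j < 8) msize (P i j))%N = 5%N.
Proof.
split; first exact: conormal_e.
rewrite em_e32 => h f tr Z X Zbar hZ hX hD.
have [g [gi [ggi gig ge fE]]] := triple_class tr.
have hZ' := basis_cj ggi gig (@cent_cj _ _ _ ggi gig ge) (@cent_uc _ _ _ ggi gig ge) hZ.
have hX' := basis_cj ggi gig (@img_cj _ _ _ _ ggi gig fE) (@img_uc _ _ _ _ ggi gig fE) hX.
have hD' : is_dual_Zpart (fun j => cj g gi (Z j)) (fun l => cj g gi (X l)) (fun s => cj g gi (Zbar s)).
  case: hD => t1 t2 t3; split.
  - by move=> s; rewrite /in_sl5 (cj_tr ggi); exact: t1.
  - by move=> s j; rewrite (cj_kill ggi); exact: t2.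
  - by move=> s l; rewrite (cj_kill ggi); exact: t3.
have [U [P [HP1 HP2]]] := f0_main hZ' hX' hD'.
split.
  by move=> q; rewrite -(CN_cj ggi gig ge); exact: U.
exists P; split => // q i j.
by rewrite -(Lambda_cj ggi gig ge); exact: HP1.
Qed.
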